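(* Let $E$ be a Banach space, $\Omega\subset\mathbb{R}^d$ open, $k\in\mathbb{N}_0$ and $0<\gamma\le1$. Let $(f_\iota)_{\iota\in I}$ be a bounded net in $\mathcal{C}^{k,\gamma}_{loc}(\Omega,E)$, and suppose either (i) $\lim_\iota f_\iota(x)$ exists for all $x$ in a dense subset $U\subset\Omega$, or (ii) $k\ge1$, $\Omega$ is connected, $\lim_\iota(\partial^{e_n})^Ef_\iota(x)$ exists for all $1\le n\le d$ and all $x$ in a dense subset $U\subset\Omega$, and there is $x_0\in\Omega$ such that $\lim_\iota f_\iota(x_0)$ exists. Then there is $f\in\mathcal{C}^{k,\gamma}_{loc}(\Omega,E)$ such that $(f_\iota)_{\iota\in I}$ converges to $f$ in $(\mathcal{C}^k(\Omega,E),\tau_{\mathcal{C}^k})$.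
   Context: $E$ is a Banach space over $\mathbb{K}\in\{\mathbb{R},\mathbb{C}\}$ with norm $\|\cdot\|$. $\mathcal{C}^{k,\gamma}_{loc}(\Omega,E)$ is the space of $k$-times continuously partially differentiable $f\colon\Omega\to E$ such that for each compact $K\subset\Omega$ the seminorm $|f|_K:=\max\bigl(\sup_{x\in K,|\beta|\le k}\|(\partial^\beta)^Ef(x)\|,\ \sup_{|\beta|=k}\sup_{x\ne y\in K}\frac{\|(\partial^\beta)^Ef(x)-(\partial^\beta)^Ef(y)\|}{|x-y|^\gamma}\bigr)$ is finite; a net is bounded if $\sup_\iota|f_\iota|_K<\infty$ for every compact $K$. $\tau_{\mathcal{C}^k}$ is the topology of uniform convergence of all partial derivatives of order $\le k$ on compact subsets of $\Omega$ (seminorms $\sup_{x\in K,|\beta|\le m}\|(\partial^\beta)^Ef(x)\|$, $K$ compact, $m\le k$). *)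

(* Defs.v *)
From Stdlib Require Import Reals Lra List Classical ClassicalEpsilon.
Open Scope R_scope.

Record Banach := MkBanach {
  bcar :> Type;
  bzero : bcar;
  badd : bcar -> bcar -> bcar;
  bopp : bcar -> bcar;
  bscal : R -> bcar -> bcar;
  bnorm : bcar -> R;
  baddA : forall x y z, badd x (badd y z) = badd (badd x y) z;
  baddC : forall x y, badd x y = badd y x;
  badd0 : forall x, badd x bzero = x;
  baddN : forall x, badd x (bopp x) = bzero;
  bscalA : forall a b x, bscal a (bscal b x) = bscal (a * b) x;
  bscal1 : forall x, bscal 1 x = x;
  bscalDr : forall a x y, bscal a (badd x y) = badd (bscal a x) (bscal a y);
  bscalDl : forall a b x, bscal (a + b) x = badd (bscal a x) (bscal b x);
  bnorm_eq0 : forall x, bnorm x = 0 -> x = bzero;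
  bnorm_scal : forall a x, bnorm (bscal a x) = Rabs a * bnorm x;
  bnorm_tri : forall x y, bnorm (badd x y) <= bnorm x + bnorm y;
  bcomplete : forall u : nat -> bcar,
    (forall eps, eps > 0 -> exists N, forall m n, (N <= m)%nat -> (N <= n)%nat ->
        bnorm (badd (u m) (bopp (u n))) < eps) ->
    exists L, forall eps, eps > 0 -> exists N, forall n, (N <= n)%nat ->
        bnorm (badd (u n) (bopp L)) < eps
}.

Definition bsub (E : Banach) (x y : E) : E := badd E x (bopp E y).

(* ---------- R^d : points are nat -> R vanishing at coordinates >= d ---------- *)
Definition inRd (d : nat) (x : nat -> R) : Prop := forall i, (d <= i)%nat -> x i = 0.

Fixpoint sumsq (d : nat) (x : nat -> R) : R :=
  match d with O => 0 | S d' => sumsq d' x + x d' * x d' end.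

Definition dist (d : nat) (x y : nat -> R) : R := sqrt (sumsq d (fun i => x i - y i)).

Definition openRd (d : nat) (O : (nat -> R) -> Prop) : Prop :=
  forall x, O x -> inRd d x /\
    exists r, r > 0 /\ forall y, inRd d y -> dist d x y < r -> O y.

Definition compactRd (d : nat) (K : (nat -> R) -> Prop) : Prop :=
  (forall x, K x -> inRd d x) /\
  forall (J : Type) (O : J -> (nat -> R) -> Prop),
    (forall j, openRd d (O j)) -> (forall x, K x -> exists j, O j x) ->
    exists l : list J, forall x, K x -> exists j, In j l /\ O j x.

Definition compact_in (d : nat) (Om K : (nat -> R) -> Prop) : Prop :=
  compactRd d K /\ forall x, K x -> Om x.

Definition connectedRd (d : nat) (Om : (nat -> R) -> Prop) : Prop :=
  forall A B : (nat -> R) -> Prop, openRd d A -> openRd d B ->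
    (forall x, Om x -> A x \/ B x) ->
    (forall x, Om x -> A x -> B x -> False) ->
    (exists x, Om x /\ A x) -> (exists x, Om x /\ B x) -> False.

Definition dense_in (d : nat) (Om U : (nat -> R) -> Prop) : Prop :=
  (forall x, U x -> Om x) /\
  forall x, Om x -> forall r, r > 0 -> exists u, U u /\ dist d x u < r.

Definition shift (n : nat) (t : R) (x : nat -> R) : nat -> R :=
  fun i => if Nat.eqb i n then x i + t else x i.

Definition is_pderiv (E : Banach) (n : nat) (g : (nat -> R) -> E) (x : nat -> R) (v : E) : Prop :=
  forall eps, eps > 0 -> exists delta, delta > 0 /\ forall t, t <> 0 -> Rabs t < delta ->
    bnorm E (bsub E (bscal E (/ t) (bsub E (g (shift n t x)) (g x))) v) < eps.

(* the partial derivative (a junk value where it does not exist) *)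
Definition pd (E : Banach) (n : nat) (g : (nat -> R) -> E) : (nat -> R) -> E :=
  fun x => epsilon (inhabits (bzero E)) (is_pderiv E n g x).

Fixpoint iterd (E : Banach) (l : list nat) (g : (nat -> R) -> E) : (nat -> R) -> E :=
  match l with nil => g | n :: l' => pd E n (iterd E l' g) end.

(* multi-index beta (only its first d entries matter) *)
Fixpoint mlist (beta : nat -> nat) (d : nat) : list nat :=
  match d with O => nil | S d' => mlist beta d' ++ repeat d' (beta d') end.

Fixpoint morder (beta : nat -> nat) (d : nat) : nat :=
  match d with O => O | S d' => (morder beta d' + beta d')%nat end.

Definition dpart (E : Banach) (d : nat) (beta : nat -> nat) (g : (nat -> R) -> E) :=
  iterd E (mlist beta d) g.

Definition contOn (E : Banach) (d : nat) (Om : (nat -> R) -> Prop) (g : (nat -> R) -> E) : Prop :=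
  forall x, Om x -> forall eps, eps > 0 -> exists delta, delta > 0 /\
    forall y, Om y -> dist d x y < delta -> bnorm E (bsub E (g y) (g x)) < eps.

Definition Ck (E : Banach) (d : nat) (Om : (nat -> R) -> Prop) (k : nat) (g : (nat -> R) -> E) : Prop :=
  (forall l : list nat, Forall (fun n => (n < d)%nat) l -> (length l < k)%nat ->
     forall n, (n < d)%nat -> forall x, Om x -> exists v, is_pderiv E n (iterd E l g) x v) /\
  (forall l : list nat, Forall (fun n => (n < d)%nat) l -> (length l <= k)%nat ->
     contOn E d Om (iterd E l g)).

(* |g|_K <= M  (the C^{k,gamma} seminorm on K is bounded by M) *)
Definition holder_bound (E : Banach) (d k : nat) (gamma : R) (K : (nat -> R) -> Prop)
    (g : (nat -> R) -> E) (M : R) : Prop :=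
  (forall beta x, (morder beta d <= k)%nat -> K x -> bnorm E (dpart E d beta g x) <= M) /\
  (forall beta x y, morder beta d = k -> K x -> K y -> x <> y ->
     bnorm E (bsub E (dpart E d beta g x) (dpart E d beta g y)) / Rpower (dist d x y) gamma <= M).

Definition Ckg_loc (E : Banach) (d : nat) (Om : (nat -> R) -> Prop) (k : nat) (gamma : R)
    (g : (nat -> R) -> E) : Prop :=
  Ck E d Om k g /\
  forall K, compact_in d Om K -> exists M, holder_bound E d k gamma K g M.

Definition directed (I : Type) (le : I -> I -> Prop) : Prop :=
  inhabited I /\ (forall i, le i i) /\ (forall i j l, le i j -> le j l -> le i l) /\
  (forall i j, exists l, le i l /\ le j l).

Definition net_lim (E : Banach) (I : Type) (le : I -> I -> Prop) (u : I -> E) (L : E) : Prop :=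
  forall eps, eps > 0 -> exists i0, forall i, le i0 i -> bnorm E (bsub E (u i) L) < eps.

Definition bounded_net (E : Banach) (d : nat) (Om : (nat -> R) -> Prop) (k : nat) (gamma : R)
    (I : Type) (F : I -> (nat -> R) -> E) : Prop :=
  (forall i, Ckg_loc E d Om k gamma (F i)) /\
  forall K, compact_in d Om K -> exists M, forall i, holder_bound E d k gamma K (F i) M.

Definition conv_Ck (E : Banach) (d : nat) (Om : (nat -> R) -> Prop) (k : nat)
    (I : Type) (le : I -> I -> Prop) (F : I -> (nat -> R) -> E) (f : (nat -> R) -> E) : Prop :=
  forall K, compact_in d Om K -> forall eps, eps > 0 -> exists i0, forall i, le i0 i ->
    forall beta x, (morder beta d <= k)%nat -> K x ->
      bnorm E (dpart E d beta (fun y => bsub E (F i y) (f y)) x) <= eps.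

(* Main.v *)
From Stdlib Require Import Reals Lra List Permutation Classical ClassicalEpsilon
  FunctionalExtensionality PropExtensionality Arith Lia ZArith.
Require Import Defs.
Open Scope R_scope.


Arguments bzero {_}. Arguments badd {_}. Arguments bopp {_}. Arguments bscal {_}.
Arguments bnorm {_}. Arguments bsub {_}.
Arguments baddA {_}. Arguments baddC {_}. Arguments badd0 {_}. Arguments baddN {_}. Arguments bscalA {_}. Arguments bscal1 {_}. Arguments bscalDr {_}. Arguments bscalDl {_}. Arguments bnorm_eq0 {_}. Arguments bnorm_scal {_}. Arguments bnorm_tri {_}.

Lemma add0l {E : Banach} (x : E) : badd bzero x = x.
Proof. rewrite baddC; apply badd0. Qed.

Lemma addNl {E : Banach} (x : E) : badd (bopp x) x = bzero.
Proof. rewrite baddC; apply baddN. Qed.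

Lemma add_cancel {E : Banach} (a b c : E) : badd a b = badd a c -> b = c.
Proof.
  intro H. rewrite <- (add0l b), <- (add0l c), <- (addNl a), <- !baddA, H. reflexivity.
Qed.

Lemma scal0 {E : Banach} (x : E) : bscal 0 x = bzero.
Proof.
  apply (add_cancel (bscal 0 x)). rewrite badd0, <- bscalDl. f_equal. lra.
Qed.

Lemma opp_unique {E : Banach} (x y : E) : badd x y = bzero -> y = bopp x.
Proof. intro H. apply (add_cancel x). rewrite H, baddN. reflexivity. Qed.

Lemma opp_scal {E : Banach} (x : E) : bopp x = bscal (-1) x.
Proof.
  symmetry; apply opp_unique. rewrite <- (bscal1 x) at 1. rewrite <- bscalDl.
  replace (1 + -1) with 0 by lra. apply scal0.
Qed.

Lemma scal_zero {E : Banach} (a : R) : bscal a (@bzero E) = bzero.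
Proof.
  apply (add_cancel (bscal a bzero)). rewrite badd0, <- bscalDr, badd0. reflexivity.
Qed.

Lemma norm0 {E : Banach} : bnorm (@bzero E) = 0.
Proof. rewrite <- (scal0 bzero), bnorm_scal, Rabs_R0. ring. Qed.

Lemma norm_opp {E : Banach} (x : E) : bnorm (bopp x) = bnorm x.
Proof. rewrite opp_scal, bnorm_scal. replace (Rabs (-1)) with 1 by (rewrite Rabs_left; lra). ring. Qed.

Lemma norm_ge0 {E : Banach} (x : E) : 0 <= bnorm x.
Proof.
  pose proof (bnorm_tri x (bopp x)) as H. rewrite baddN, norm0, norm_opp in H. lra.
Qed.

Lemma opp_add {E : Banach} (x y : E) : bopp (badd x y) = badd (bopp x) (bopp y).
Proof. rewrite !opp_scal. apply bscalDr. Qed.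

Lemma opp_opp {E : Banach} (x : E) : bopp (bopp x) = x.
Proof. rewrite !opp_scal, bscalA. replace (-1 * -1) with 1 by lra. apply bscal1. Qed.

Lemma opp0 {E : Banach} : bopp (@bzero E) = bzero.
Proof. rewrite opp_scal. apply scal_zero. Qed.

Lemma scal_opp {E : Banach} a (x : E) : bscal a (bopp x) = bopp (bscal a x).
Proof. rewrite !opp_scal, !bscalA. f_equal. ring. Qed.

Lemma scal_oppl {E : Banach} a (x : E) : bscal (- a) x = bopp (bscal a x).
Proof. rewrite !opp_scal, !bscalA. f_equal. ring. Qed.

Lemma sub_eq0 {E : Banach} (x y : E) : bsub x y = bzero -> x = y.
Proof. unfold bsub; intro H. pose proof (opp_unique _ _ H) as H0.
  rewrite <- (opp_opp x), <- (opp_opp y), H0. reflexivity. Qed.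

Lemma subxx {E : Banach} (x : E) : bsub x x = bzero.
Proof. apply baddN. Qed.

Lemma sub0r {E : Banach} (x : E) : bsub x bzero = x.
Proof. unfold bsub. rewrite opp0. apply badd0. Qed.

Lemma norm_sub_sym {E : Banach} (x y : E) : bnorm (bsub x y) = bnorm (bsub y x).
Proof.
  rewrite <- norm_opp. f_equal. unfold bsub. rewrite opp_add, opp_opp. apply baddC.
Qed.

Lemma add4 {E : Banach} (a b c d : E) : badd (badd a b) (badd c d) = badd (badd a c) (badd b d).
Proof. rewrite <- !baddA. f_equal. rewrite !baddA. f_equal. apply baddC. Qed.

Lemma sub_add_sub {E : Banach} (x y z : E) : badd (bsub x y) (bsub y z) = bsub x z.
Proof.
  unfold bsub. rewrite <- baddA. f_equal. rewrite baddA, addNl. apply add0l.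
Qed.

Lemma norm_tri_sub {E : Banach} (x y z : E) : bnorm (bsub x z) <= bnorm (bsub x y) + bnorm (bsub y z).
Proof. rewrite <- (sub_add_sub x y z). apply bnorm_tri. Qed.

Lemma sub_sub {E : Banach} (a b c d : E) : bsub (bsub a b) (bsub c d) = bsub (bsub a c) (bsub b d).
Proof. unfold bsub. rewrite !opp_add, !opp_opp. apply add4. Qed.

Lemma norm_sub_le {E : Banach} (x y : E) : bnorm (bsub x y) <= bnorm x + bnorm y.
Proof. unfold bsub. rewrite <- (norm_opp y). apply bnorm_tri. Qed.

Lemma norm_sub_ge {E : Banach} (x y : E) : bnorm x - bnorm y <= bnorm (bsub x y).
Proof. pose proof (norm_tri_sub x y bzero). rewrite !sub0r in H. lra. Qed.

Lemma scal_sub {E : Banach} a (x y : E) : bscal a (bsub x y) = bsub (bscal a x) (bscal a y).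
Proof. unfold bsub. rewrite bscalDr, scal_opp. reflexivity. Qed.

Lemma scal_subl {E : Banach} a b (x : E) : bscal (a - b) x = bsub (bscal a x) (bscal b x).
Proof. unfold bsub, Rminus. rewrite bscalDl, scal_oppl. reflexivity. Qed.

Lemma norm_eq0_sub {E : Banach} (x y : E) : bnorm (bsub x y) = 0 -> x = y.
Proof. intro H. apply sub_eq0, bnorm_eq0, H. Qed.

Lemma norm_small_eq {E : Banach} (x y : E) :
  (forall eps, eps > 0 -> bnorm (bsub x y) <= eps) -> x = y.
Proof.
  intro H. apply norm_eq0_sub. pose proof (norm_ge0 (bsub x y)).
  destruct (Req_dec (bnorm (bsub x y)) 0) as [h|h]; auto.
  specialize (H (bnorm (bsub x y) / 2)). assert (bnorm (bsub x y) / 2 > 0) by lra.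
  specialize (H H1). lra.
Qed.

Lemma le_eps {a b : R} : (forall eps, eps > 0 -> a <= b + eps) -> a <= b.
Proof.
  intro H. destruct (Rle_dec a b); auto. specialize (H ((a-b)/2)). lra.
Qed.


Lemma shift_shift n s t x : shift n s (shift n t x) = shift n (t + s) x.
Proof. apply functional_extensionality; intro i. unfold shift.
  destruct (Nat.eqb i n); lra. Qed.

Lemma shift_comm a b s t x : shift a s (shift b t x) = shift b t (shift a s x).
Proof. apply functional_extensionality; intro i. unfold shift.
  destruct (Nat.eqb i a), (Nat.eqb i b); lra. Qed.

Lemma shift0 n x : shift n 0 x = x.
Proof. apply functional_extensionality; intro i. unfold shift.
  destruct (Nat.eqb i n); lra. Qed.

Lemma shift_at n t x : shift n t x n = x n + t.
Proof. unfold shift. rewrite Nat.eqb_refl. reflexivity. Qed.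

Lemma shift_other n t x i : i <> n -> shift n t x i = x i.
Proof. intro h. unfold shift. apply Nat.eqb_neq in h. rewrite h. reflexivity. Qed.

Lemma inRd_shift d n t x : (n < d)%nat -> inRd d x -> inRd d (shift n t x).
Proof. intros hn hx i hi. rewrite shift_other by lia. apply hx; auto. Qed.

Lemma sumsq_ext d f g : (forall i, (i < d)%nat -> f i = g i) -> sumsq d f = sumsq d g.
Proof. induction d; simpl; intros; auto. rewrite IHd by (intros; apply H; lia).
  rewrite H by lia. reflexivity. Qed.

Lemma sumsq_ge0 d f : 0 <= sumsq d f.
Proof. induction d; simpl; try lra. pose proof (Rle_0_sqr (f d)). unfold Rsqr in H. lra. Qed.

Lemma sumsq_coord d f i : (i < d)%nat -> f i * f i <= sumsq d f.
Proof. induction d; intros; [lia|]. simpl. pose proof (sumsq_ge0 d f).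
  pose proof (Rle_0_sqr (f d)); unfold Rsqr in *.
  destruct (Nat.eq_dec i d). subst; lra. assert (i < d)%nat by lia. specialize (IHd H2). lra. Qed.

Lemma dist_ge0 d x y : 0 <= dist d x y.
Proof. apply sqrt_pos. Qed.

Lemma dist_sym d x y : dist d x y = dist d y x.
Proof. unfold dist. f_equal. induction d; simpl; auto. rewrite IHd. ring. Qed.

Lemma dist_refl d x : dist d x x = 0.
Proof. unfold dist. rewrite (sumsq_ext d _ (fun _ => 0)). 2: intros; ring.
  replace (sumsq d (fun _ => 0)) with 0. apply sqrt_0.
  induction d; simpl; auto. rewrite <- IHd. ring. Qed.

Lemma coord_le_dist d x y i : (i < d)%nat -> Rabs (x i - y i) <= dist d x y.
Proof. intro hi. unfold dist. rewrite <- sqrt_Rsqr_abs. apply sqrt_le_1_alt.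
  unfold Rsqr. apply (sumsq_coord d (fun i => x i - y i)); auto. Qed.

Fixpoint sumabs (d : nat) (v : nat -> R) : R :=
  match d with O => 0 | S d' => sumabs d' v + Rabs (v d') end.

Lemma sumabs_ge0 d v : 0 <= sumabs d v.
Proof. induction d; simpl; try lra. pose proof (Rabs_pos (v d)); lra. Qed.

Lemma sqrt_sumsq_le d v : sqrt (sumsq d v) <= sumabs d v.
Proof. induction d; simpl. rewrite sqrt_0; lra.
  pose proof (sumabs_ge0 d v). pose proof (Rabs_pos (v d)).
  apply Rsqr_incr_0_var. 2: lra.
  rewrite Rsqr_sqrt. 2: pose proof (sumsq_ge0 d v); pose proof (Rle_0_sqr (v d)); unfold Rsqr in *; lra.
  unfold Rsqr. assert (v d * v d = Rabs (v d) * Rabs (v d)).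
  { rewrite <- Rabs_mult. rewrite Rabs_right; auto. pose proof (Rle_0_sqr (v d)); unfold Rsqr in *; lra. }
  assert (sumsq d v <= sumabs d v * sumabs d v).
  { pose proof (sumsq_ge0 d v). apply Rsqr_incr_1 in IHd. 2: apply sqrt_pos. 2: auto.
    rewrite Rsqr_sqrt in IHd; auto. }
  nra.
Qed.

Lemma sumabs_le d v r : (forall i, (i < d)%nat -> Rabs (v i) <= r) -> sumabs d v <= INR d * r.
Proof. induction d; intros. simpl; lra. replace (sumabs (S d) v) with (sumabs d v + Rabs (v d)) by reflexivity. rewrite S_INR.
  assert (sumabs d v <= INR d * r) by (apply IHd; intros; apply H; lia).
  specialize (H d (Nat.lt_succ_diag_r d)). lra. Qed.

Definition cube d (x : nat -> R) r (y : nat -> R) : Prop :=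
  inRd d y /\ forall i, (i < d)%nat -> Rabs (y i - x i) < r.

Lemma cube_dist d x r y : cube d x r y -> dist d x y <= INR d * r.
Proof. intros [_ h]. unfold dist. eapply Rle_trans. apply sqrt_sumsq_le.
  apply sumabs_le. intros. rewrite Rabs_minus_sym. left; auto. Qed.

Lemma ball_cube d x r y : inRd d y -> dist d x y < r -> cube d x r y.
Proof. intros hy h. split; auto. intros i hi. rewrite Rabs_minus_sym.
  eapply Rle_lt_trans; [apply (coord_le_dist d); auto| exact h]. Qed.

Lemma cube_center d x r : inRd d x -> r > 0 -> cube d x r x.
Proof. intros. split; auto. intros. replace (x i - x i) with 0 by ring. rewrite Rabs_R0; lra. Qed.

Lemma fin_min d (a : nat -> R) : (forall i, (i < d)%nat -> 0 < a i) ->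
  exists m, 0 < m /\ forall i, (i < d)%nat -> m <= a i.
Proof. induction d; intros.
  - exists 1. split. lra. intros; lia.
  - destruct IHd as [m [hm hm']]. intros; apply H; lia.
    exists (Rmin m (a d)). split. { apply Rmin_pos; auto. }
    intros i hi. destruct (Nat.eq_dec i d). subst; apply Rmin_r.
    eapply Rle_trans. apply Rmin_l. apply hm'; lia. Qed.

Lemma cube_open d x r : openRd d (cube d x r).
Proof. intros y [hy hc]. split; auto.
  destruct (fin_min d (fun i => r - Rabs (y i - x i))) as [m [hm hm']].
  { intros. specialize (hc i H). lra. }
  exists m. split; auto. intros z hz hd. split; auto. intros i hi.
  specialize (hm' i hi). pose proof (coord_le_dist d y z i hi).
  replace (z i - x i) with ((z i - y i) + (y i - x i)) by ring.
  eapply Rle_lt_trans. apply Rabs_triang. rewrite Rabs_minus_sym. lra. Qed.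

Lemma open_cube d O x : openRd d O -> O x ->
  exists r, r > 0 /\ forall y, cube d x r y -> O y.
Proof. intros hO hx. destruct (hO x hx) as [_ [R [hR hR']]].
  exists (R / (INR d + 1)). pose proof (pos_INR d). split.
  apply Rdiv_lt_0_compat; lra.
  intros y hy. apply hR'. apply hy. eapply Rle_lt_trans. apply cube_dist; eauto.
  assert (R = (R / (INR d + 1)) * (INR d + 1)) by (field; lra).
  assert (0 < R / (INR d + 1)) by (apply Rdiv_lt_0_compat; lra).
  set (q := R / (INR d + 1)) in *. nra. Qed.

Lemma cube_shift d x r y n s : (n < d)%nat -> cube d x r y -> Rabs (y n + s - x n) < r ->
  cube d x r (shift n s y).
Proof. intros hn [hy hc] hs. split. apply inRd_shift; auto.
  intros i hi. destruct (Nat.eq_dec i n). subst. rewrite shift_at. auto.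
  rewrite shift_other; auto. Qed.

Lemma cube_sub d x r r' y : r <= r' -> cube d x r y -> cube d x r' y.
Proof. intros h [a b]. split; auto. intros i hi. specialize (b i hi). lra. Qed.

Lemma dist_shift d n t x : (n < d)%nat -> dist d x (shift n t x) = Rabs t.
Proof. intro hn. unfold dist. induction d. lia.
  simpl. destruct (Nat.eq_dec n d).
  - subst. rewrite (sumsq_ext d _ (fun _ => 0)).
    2:{ intros. rewrite shift_other by lia. ring. }
    replace (sumsq d (fun _ => 0)) with 0.
    2:{ clear. induction d; simpl; auto. rewrite <- IHd. ring. }
    rewrite shift_at. replace (0 + (x d - (x d + t)) * (x d - (x d + t))) with (t*t) by ring.
    apply sqrt_Rsqr_abs.
  - rewrite shift_other by auto. replace (x d - x d) with 0 by ring.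
    rewrite Rmult_0_l, Rplus_0_r. apply IHd. lia. Qed.

Lemma dist_pos d x y : inRd d x -> inRd d y -> x <> y -> 0 < dist d x y.
Proof. intros hx hy hne. destruct (dist_ge0 d x y); auto. exfalso. apply hne.
  apply functional_extensionality; intro i. destruct (Nat.lt_ge_cases i d).
  - pose proof (coord_le_dist d x y i H0). rewrite <- H in H1.
    pose proof (Rabs_pos (x i - y i)). assert (Rabs (x i - y i) = 0) by lra.
    destruct (Req_dec (x i - y i) 0). lra. apply Rabs_no_R0 in H4. lra.
  - rewrite hx, hy; auto. Qed.


Lemma quot_bound {E : Banach} (h : R) (a v : E) eps : h <> 0 ->
  bnorm (bsub (bscal (/ h) a) v) < eps -> bnorm a <= Rabs h * (bnorm v + eps).
Proof. intros hh H. replace a with (bscal h (bscal (/h) a)).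
  2:{ rewrite bscalA, Rinv_r, bscal1; auto. }
  rewrite bnorm_scal. apply Rmult_le_compat_l. apply Rabs_pos.
  pose proof (norm_tri_sub (bscal (/h) a) v bzero). rewrite !sub0r in H0. lra.
Qed.

Lemma is_pderiv_unique (E : Banach) n g x v w : is_pderiv E n g x v -> is_pderiv E n g x w -> v = w.
Proof. intros hv hw. apply norm_small_eq. intros e he.
  destruct (hv (e/2)) as [d1 [hd1 h1]]; [lra|]. destruct (hw (e/2)) as [d2 [hd2 h2]]; [lra|].
  set (t := Rmin d1 d2 / 2). assert (0 < Rmin d1 d2) by (apply Rmin_pos; auto).
  assert (t <> 0) by (unfold t; lra). assert (Rabs t < d1 /\ Rabs t < d2).
  { unfold t. rewrite Rabs_right by lra. pose proof (Rmin_l d1 d2). pose proof (Rmin_r d1 d2). lra. }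
  specialize (h1 t H0 (proj1 H1)). specialize (h2 t H0 (proj2 H1)).
  set (q := bscal (/ t) (bsub (g (shift n t x)) (g x))) in *.
  pose proof (norm_tri_sub v q w). rewrite (norm_sub_sym v q) in H2. lra. Qed.

Lemma pd_spec (E : Banach) n g x v : is_pderiv E n g x v -> pd E n g x = v.
Proof. intro h. unfold pd. apply (is_pderiv_unique E n g x).
  apply epsilon_spec. exists v; auto. auto. Qed.

Lemma pd_spec' (E : Banach) n g x : (exists v, is_pderiv E n g x v) -> is_pderiv E n g x (pd E n g x).
Proof. intros [v h]. rewrite (pd_spec E n g x v h). auto. Qed.

Lemma is_pderiv_local (E : Banach) d O n g h x v : openRd d O -> O x -> (n < d)%nat ->
  (forall y, O y -> g y = h y) -> is_pderiv E n g x v -> is_pderiv E n h x v.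
Proof. intros hO hx hn hgh H e he. destruct (H e he) as [dl [hdl H1]].
  destruct (hO x hx) as [hxr [r [hr hr']]].
  exists (Rmin dl r). split. apply Rmin_pos; auto. intros t ht htl.
  assert (O (shift n t x)). { apply hr'. apply inRd_shift; auto. rewrite dist_shift; auto.
    eapply Rlt_le_trans; [exact htl| apply Rmin_r]. }
  rewrite <- !hgh; auto. apply H1; auto. eapply Rlt_le_trans; [exact htl| apply Rmin_l]. Qed.

Lemma pd_local (E : Banach) d O n g h x : openRd d O -> O x -> (n < d)%nat ->
  (forall y, O y -> g y = h y) -> pd E n g x = pd E n h x.
Proof. intros. unfold pd. f_equal. apply functional_extensionality; intro v.
  apply propositional_extensionality. split; apply is_pderiv_local with d O; auto.
  intros; symmetry; auto. Qed.

Lemma is_pderiv_sub (E : Banach) n g h x v w : is_pderiv E n g x v -> is_pderiv E n h x w ->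
  is_pderiv E n (fun y => bsub (g y) (h y)) x (bsub v w).
Proof. intros hg hh e he. destruct (hg (e/2)) as [d1 [hd1 h1]]; [lra|].
  destruct (hh (e/2)) as [d2 [hd2 h2]]; [lra|]. exists (Rmin d1 d2). split. apply Rmin_pos; auto.
  intros t ht htl. specialize (h1 t ht (Rlt_le_trans _ _ _ htl (Rmin_l _ _))).
  specialize (h2 t ht (Rlt_le_trans _ _ _ htl (Rmin_r _ _))).
  rewrite sub_sub, scal_sub, sub_sub. eapply Rle_lt_trans. apply norm_sub_le. lra. Qed.

Lemma is_pderiv_shiftcomp (E : Banach) a b t h p v : is_pderiv E a h (shift b t p) v ->
  is_pderiv E a (fun y => h (shift b t y)) p v.
Proof. intros H e he. destruct (H e he) as [dl [hdl H1]]. exists dl. split; auto.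
  intros s hs hsl. rewrite shift_comm. apply H1; auto. Qed.

Definition hasder {E : Banach} (phi : R -> E) (s : R) (v : E) : Prop :=
  forall eps, eps > 0 -> exists delta, delta > 0 /\ forall h, h <> 0 -> Rabs h < delta ->
    bnorm (bsub (bscal (/ h) (bsub (phi (s + h)) (phi s))) v) < eps.

Lemma pderiv_hasder (E : Banach) n g x s v : is_pderiv E n g (shift n s x) v ->
  hasder (fun u => g (shift n u x)) s v.
Proof. intros H e he. destruct (H e he) as [dl [hdl H1]]. exists dl. split; auto.
  intros h hh hhl. specialize (H1 h hh hhl). rewrite shift_shift in H1. exact H1. Qed.

Lemma MVI0 (E : Banach) (phi : R -> E) T M : 0 <= T ->
  (forall s, 0 <= s <= T -> exists v, hasder phi s v /\ bnorm v <= M) ->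
  bnorm (bsub (phi T) (phi 0)) <= M * T.
Proof.
  intros hT H. apply le_eps. intros e he.
  set (ep := e / (T + 1)). assert (hep : ep > 0) by (unfold ep; apply Rdiv_lt_0_compat; lra).
  assert (ep * T <= e). { assert (e = ep * (T + 1)) by (unfold ep; field; lra). nra. }
  enough (bnorm (bsub (phi T) (phi 0)) <= (M + ep) * T) by nra.
  set (P := fun u => bnorm (bsub (phi u) (phi 0)) <= (M + ep) * u).
  set (S := fun s => 0 <= s <= T /\ forall u, 0 <= u <= s -> P u).
  assert (hS0 : S 0). { split. lra. intros u hu. replace u with 0 by lra. unfold P.
    rewrite subxx, norm0. lra. }
  assert (hb : bound S). { exists T. intros s [hs _]. lra. }
  destruct (completeness S hb (ex_intro _ 0 hS0)) as [sg [hub hlub]].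
  assert (hsg0 : 0 <= sg) by (apply hub; auto).
  assert (hsgT : sg <= T). { apply hlub. intros s [hs _]. lra. }
  assert (below : forall u, 0 <= u < sg -> P u).
  { intros u hu. destruct (classic (exists s, S s /\ u < s)) as [[s [[_ hs] hus]]|hn].
    - apply hs. lra.
    - exfalso. assert (sg <= u). { apply hlub. intros s hs. destruct (Rle_dec s u); auto.
        exfalso; apply hn; exists s; split; auto; lra. } lra. }
  assert (Psg : P sg).
  { destruct (H sg (conj hsg0 hsgT)) as [v [hv hvM]].
    destruct (Req_dec sg 0) as [z|nz]. { rewrite z. unfold P. rewrite subxx, norm0. lra. }
    unfold P. apply le_eps. intros eta heta.
    destruct (hv 1 Rlt_0_1) as [dl [hdl H1]].
    pose proof (norm_ge0 v).
    set (h := Rmin (Rmin (dl/2) (sg/2)) (eta / (bnorm v + 1))).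
    assert (hpos : 0 < h). { unfold h. apply Rmin_pos. apply Rmin_pos; lra. apply Rdiv_lt_0_compat; lra. }
    assert (h1 : h <= dl/2) by (unfold h; eapply Rle_trans; apply Rmin_l).
    assert (h2 : h <= sg/2) by (unfold h; eapply Rle_trans; [apply Rmin_l| apply Rmin_r]).
    assert (h3 : h <= eta / (bnorm v + 1)) by (unfold h; apply Rmin_r).
    assert (h * (bnorm v + 1) <= eta). { apply Rmult_le_reg_r with (/ (bnorm v + 1)).
      apply Rinv_0_lt_compat; lra. rewrite Rmult_assoc, Rinv_r; lra. }
    specialize (H1 (- h)). assert (- h <> 0) by lra. assert (Rabs (-h) < dl) by (rewrite Rabs_left; lra).
    specialize (H1 H4 H5). apply quot_bound in H1; auto. rewrite Rabs_left in H1 by lra.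
    assert (P (sg + - h)) by (apply below; lra). unfold P in H6.
    pose proof (norm_tri_sub (phi sg) (phi (sg + - h)) (phi 0)). rewrite norm_sub_sym in H1.
    nra. }
  assert (Ssg : S sg). { split. lra. intros u hu. destruct (Req_dec u sg). subst; auto. apply below; lra. }
  destruct (Req_dec sg T) as [eq|neq]. { subst. exact Psg. }
  exfalso. destruct (H sg (conj hsg0 hsgT)) as [v [hv hvM]].
  destruct (hv ep hep) as [dl [hdl H1]].
  set (h := Rmin dl (T - sg) / 2).
  assert (0 < Rmin dl (T - sg)) by (apply Rmin_pos; lra).
  assert (hh1 : 0 < h) by (unfold h; lra).
  assert (hh2 : h < dl) by (unfold h; pose proof (Rmin_l dl (T-sg)); lra).
  assert (hh3 : h < T - sg) by (unfold h; pose proof (Rmin_r dl (T-sg)); lra).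
  assert (HS : S (sg + h)).
  { split. lra. intros u hu. destruct (Rle_dec u sg). apply Ssg; lra.
    set (h' := u - sg). assert (h' <> 0) by (unfold h'; lra).
    assert (Rabs h' < dl) by (unfold h'; rewrite Rabs_right; lra).
    specialize (H1 h' H3 H4). apply quot_bound in H1; auto.
    rewrite Rabs_right in H1 by (unfold h'; lra). replace (sg + h') with u in H1 by (unfold h'; ring).
    unfold P. pose proof (norm_tri_sub (phi u) (phi sg) (phi 0)).
    unfold P in Psg. unfold h' in H1. nra. }
  apply hub in HS. lra.
Qed.

Lemma MVI1 (E : Banach) (phi : R -> E) (w : R -> E) c T M : 0 <= T ->
  (forall s, 0 <= s <= T -> hasder phi s (w s) /\ bnorm (bsub (w s) c) <= M) ->
  bnorm (bsub (bsub (phi T) (phi 0)) (bscal T c)) <= M * T.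
Proof.
  intros hT H. set (psi := fun u => bsub (phi u) (bscal u c)).
  assert (bsub (bsub (phi T) (phi 0)) (bscal T c) = bsub (psi T) (psi 0)).
  { unfold psi. rewrite scal0, sub0r. unfold bsub. rewrite <- !baddA. f_equal. apply baddC. }
  rewrite H0. apply MVI0; auto. intros s hs. exists (bsub (w s) c). split; [|apply H; auto].
  destruct (H s hs) as [hd _]. intros e he. destruct (hd e he) as [dl [hdl H1]].
  exists dl; split; auto. intros h hh hhl. specialize (H1 h hh hhl).
  unfold psi. rewrite sub_sub, <- scal_subl. replace (s + h - s) with h by ring.
  rewrite scal_sub, bscalA, Rinv_l, bscal1 by auto. rewrite sub_sub, subxx, sub0r. auto.
Qed.

Definition betw (t s : R) : Prop := (0 <= s <= t) \/ (t <= s <= 0).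

Lemma MVI_seg (E : Banach) g x n t c M (w : R -> E) :
  (forall s, betw t s -> is_pderiv E n g (shift n s x) (w s) /\ bnorm (bsub (w s) c) <= M) ->
  bnorm (bsub (bsub (g (shift n t x)) (g x)) (bscal t c)) <= M * Rabs t.
Proof.
  intros H. destruct (Rle_dec 0 t).
  - rewrite Rabs_right by lra.
    pose proof (MVI1 E (fun u => g (shift n u x)) w c t M r) as HM. simpl in HM.
    rewrite shift0 in HM. apply HM. intros s hs. destruct (H s (or_introl hs)).
    split; auto. apply pderiv_hasder; auto.
  - rewrite Rabs_left by lra. set (y := shift n t x).
    pose proof (MVI1 E (fun u => g (shift n u y)) (fun u => w (t + u)) c (- t) M) as HM.
    simpl in HM. rewrite shift0 in HM. unfold y in HM. rewrite shift_shift in HM.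
    replace (t + - t) with 0 in HM by ring. rewrite shift0 in HM.
    assert (bnorm (bsub (bsub (g x) (g (shift n t x))) (bscal (- t) c)) <= M * - t).
    { apply HM. lra. intros s hs. destruct (H (t + s)). right; lra. split; auto.
      unfold y. apply pderiv_hasder. rewrite shift_shift. auto. }
    unfold y. rewrite <- norm_opp.
    assert (bsub (bsub (g x) (g (shift n t x))) (bscal (- t) c) =
      bopp (bsub (bsub (g (shift n t x)) (g x)) (bscal t c))) as <-; [|exact H0].
    unfold bsub. rewrite scal_oppl, !opp_add, !opp_opp.
    f_equal. apply baddC.
Qed.


Lemma betw_abs t s : betw t s -> Rabs s <= Rabs t.
Proof. intros [h|h]. rewrite !Rabs_right; lra. rewrite !Rabs_left1; lra. Qed.

Definition Delta {E : Banach} (h : (nat -> R) -> E) a b s t x : E :=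
  bsub (bsub (h (shift b t (shift a s x))) (h (shift a s x))) (bsub (h (shift b t x)) (h x)).

Lemma mixed_est (E : Banach) d O h a b x : openRd d O -> O x -> (a < d)%nat -> (b < d)%nat -> a <> b ->
  (forall y, O y -> exists v, is_pderiv E a h y v) ->
  (forall y, O y -> exists v, is_pderiv E b (pd E a h) y v) ->
  contOn E d O (pd E b (pd E a h)) ->
  forall eta, eta > 0 -> exists rho, rho > 0 /\ forall s t, Rabs s < rho -> Rabs t < rho ->
    bnorm (bsub (Delta h a b s t x) (bscal (s * t) (pd E b (pd E a h) x))) <= Rabs s * Rabs t * eta.
Proof.
  intros hO hx ha hb hab Hda Hdba Hc eta heta.
  destruct (Hc x hx eta heta) as [dl [hdl Hdl]].
  destruct (open_cube d O x hO hx) as [r [hr Hr]].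
  pose proof (pos_INR d).
  set (rho := Rmin (dl / (INR d + 1)) r).
  assert (hrho : rho > 0). { apply Rmin_pos; auto. apply Rdiv_lt_0_compat; lra. }
  exists rho. split; auto. intros s t hs ht.
  set (c0 := pd E b (pd E a h) x).
  assert (hxd : inRd d x) by (destruct (hO x hx); auto).
  assert (Hpt : forall sg tau, Rabs sg <= Rabs s -> Rabs tau <= Rabs t ->
     cube d x rho (shift b tau (shift a sg x))).
  { intros sg tau h1 h2.
    assert (cube d x rho (shift a sg x)).
    { apply cube_shift; auto. apply cube_center; auto.
      replace (x a + sg - x a) with sg by ring. lra. }
    apply cube_shift; auto.
    rewrite shift_other by auto. replace (x b + tau - x b) with tau by ring. lra. }
  assert (HO : forall y, cube d x rho y -> O y).
  { intros y hy. apply Hr. eapply cube_sub; [|exact hy]. apply Rmin_r. }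
  assert (Hcl : forall y, cube d x rho y -> bnorm (bsub (pd E b (pd E a h) y) c0) < eta).
  { intros y hy. apply Hdl; auto. pose proof (cube_dist _ _ _ _ hy).
    eapply Rle_lt_trans; [exact H0|]. unfold rho.
    apply Rle_lt_trans with (INR d * (dl / (INR d + 1))).
    apply Rmult_le_compat_l; auto. apply Rmin_l.
    assert (dl = (dl / (INR d + 1)) * (INR d + 1)) by (field; lra).
    assert (0 < dl / (INR d + 1)) by (apply Rdiv_lt_0_compat; lra).
    set (q := dl / (INR d + 1)) in *. nra. }
  set (g2 := fun y => bsub (h (shift b t y)) (h y)).
  assert (Hpt0 : forall sg, Rabs sg <= Rabs s -> cube d x rho (shift a sg x)).
  { intros sg hsg. pose proof (Hpt sg 0 hsg). rewrite shift0 in H0. apply H0.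
    rewrite Rabs_R0; apply Rabs_pos. }
  assert (Hw : forall sg, betw s sg ->
    is_pderiv E a g2 (shift a sg x)
      (bsub (pd E a h (shift b t (shift a sg x))) (pd E a h (shift a sg x))) /\
    bnorm (bsub (bsub (pd E a h (shift b t (shift a sg x))) (pd E a h (shift a sg x)))
      (bscal t c0)) <= Rabs t * eta).
  { intros sg hsg. apply betw_abs in hsg. split.
    - apply is_pderiv_sub. apply is_pderiv_shiftcomp. apply pd_spec'. apply Hda.
      apply HO, Hpt; auto; lra. apply pd_spec', Hda, HO, Hpt0; auto.
    - rewrite Rmult_comm.
      apply (MVI_seg E (pd E a h) (shift a sg x) b t c0 eta
               (fun tau => pd E b (pd E a h) (shift b tau (shift a sg x)))).
      intros tau htau. apply betw_abs in htau. split.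
      + apply pd_spec'. apply Hdba. apply HO, Hpt; auto.
      + left. apply Hcl, Hpt; auto. }
  pose proof (MVI_seg E g2 x a s (bscal t c0) (Rabs t * eta) _ Hw) as HM.
  unfold g2 in HM. unfold Delta. rewrite <- bscalA. fold c0.
  replace (Rabs s * Rabs t * eta) with (Rabs t * eta * Rabs s) by ring. exact HM.
Qed.

Lemma schwarz (E : Banach) d O h a b x : openRd d O -> O x -> (a < d)%nat -> (b < d)%nat ->
  (forall y, O y -> exists v, is_pderiv E a h y v) ->
  (forall y, O y -> exists v, is_pderiv E b h y v) ->
  (forall y, O y -> exists v, is_pderiv E b (pd E a h) y v) ->
  (forall y, O y -> exists v, is_pderiv E a (pd E b h) y v) ->
  contOn E d O (pd E b (pd E a h)) -> contOn E d O (pd E a (pd E b h)) ->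
  pd E b (pd E a h) x = pd E a (pd E b h) x.
Proof.
  intros hO hx ha hb H1 H2 H3 H4 C1 C2.
  destruct (Nat.eq_dec a b) as [e|ne]. { subst; reflexivity. }
  apply norm_small_eq. intros eps heps.
  destruct (mixed_est E d O h a b x hO hx ha hb ne H1 H3 C1 (eps/2)) as [r1 [hr1 R1]]; [lra|].
  destruct (mixed_est E d O h b a x hO hx hb ha (not_eq_sym ne) H2 H4 C2 (eps/2)) as [r2 [hr2 R2]]; [lra|].
  set (s := Rmin r1 r2 / 2). assert (0 < Rmin r1 r2) by (apply Rmin_pos; auto).
  assert (hs : 0 < s) by (unfold s; lra).
  assert (Rabs s < r1 /\ Rabs s < r2).
  { unfold s. rewrite Rabs_right by lra. pose proof (Rmin_l r1 r2). pose proof (Rmin_r r1 r2). lra. }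
  specialize (R1 s s (proj1 H0) (proj1 H0)). specialize (R2 s s (proj2 H0) (proj2 H0)).
  assert (Delta h b a s s x = Delta h a b s s x).
  { unfold Delta. rewrite shift_comm. rewrite sub_sub. reflexivity. }
  rewrite H5 in R2.
  set (c0 := pd E b (pd E a h) x) in *. set (c1 := pd E a (pd E b h) x) in *.
  set (D := Delta h a b s s x) in *.
  pose proof (norm_tri_sub (bscal (s*s) c0) D (bscal (s*s) c1)).
  rewrite (norm_sub_sym _ D) in H6. rewrite <- scal_sub, bnorm_scal in H6.
  rewrite Rabs_right in * by nra.
  assert (s * s * bnorm (bsub c0 c1) <= s * s * eps) by nra.
  apply Rmult_le_reg_l in H7; auto. nra.
Qed.


Definition cnt (l : list nat) : nat -> nat := fun j => count_occ Nat.eq_dec l j.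

Lemma count_mlist beta d x : count_occ Nat.eq_dec (mlist beta d) x = if x <? d then beta x else 0%nat.
Proof. induction d; simpl. reflexivity. rewrite count_occ_app, IHd.
  destruct (Nat.eq_dec x d).
  - subst. rewrite count_occ_repeat_eq by auto. rewrite Nat.ltb_irrefl.
    assert (d <? S d = true) by (apply Nat.ltb_lt; lia). rewrite H. lia.
  - rewrite count_occ_repeat_neq by auto.
    destruct (x <? d) eqn:E1; destruct (x <? S d) eqn:E2; try lia.
    apply Nat.ltb_lt in E1; apply Nat.ltb_ge in E2; lia.
    apply Nat.ltb_ge in E1; apply Nat.ltb_lt in E2; lia. Qed.

Lemma mlist_length beta d : length (mlist beta d) = morder beta d.
Proof. induction d; simpl; auto. rewrite length_app, repeat_length. lia. Qed.

Lemma mlist_Forall beta d : Forall (fun n => (n < d)%nat) (mlist beta d).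
Proof. induction d; simpl; auto. apply Forall_app. split.
  eapply Forall_impl; [|exact IHd]. simpl; intros; lia.
  apply Forall_forall. intros x hx. apply repeat_spec in hx. lia. Qed.

Lemma perm_mlist d l : Forall (fun n => (n < d)%nat) l -> Permutation l (mlist (cnt l) d).
Proof. intro hl. apply (Permutation_count_occ Nat.eq_dec). intro x. rewrite count_mlist.
  destruct (x <? d) eqn:E. reflexivity. apply Nat.ltb_ge in E.
  apply count_occ_not_In. intro hin. rewrite Forall_forall in hl. specialize (hl x hin). lia. Qed.

Lemma morder_cnt d l : Forall (fun n => (n < d)%nat) l -> morder (cnt l) d = length l.
Proof. intro hl. rewrite <- mlist_length. symmetry. apply Permutation_length, perm_mlist; auto. Qed.

Lemma perm_iterd (E : Banach) d O k g : openRd d O -> Ck E d O k g ->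
  forall l l', Permutation l l' -> Forall (fun n => (n < d)%nat) l -> (length l <= k)%nat ->
  forall y, O y -> iterd E l g y = iterd E l' g y.
Proof.
  intros hO [C1 C2] l l' hp. induction hp; intros hf hk z hz.
  - reflexivity.
  - simpl. inversion hf; subst. apply pd_local with d O; auto. intros; apply IHhp; auto.
    simpl in hk; lia.
  - simpl. inversion hf; subst. inversion H2; subst. simpl in hk.
    apply schwarz with d O; auto.
    + intros; apply C1; auto; lia.
    + intros; apply C1; auto; lia.
    + intros. apply (C1 (x :: l)); auto; simpl; lia.
    + intros. apply (C1 (y :: l)); auto; simpl; lia.
    + apply (C2 (y :: x :: l)); auto.
    + apply (C2 (x :: y :: l)); auto.
  - rewrite IHhp1; auto. apply IHhp2; auto. eapply Permutation_Forall; eauto.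
    rewrite <- (Permutation_length hp1); auto.
Qed.

Lemma iterd_dpart (E : Banach) d O k g l y : openRd d O -> Ck E d O k g ->
  Forall (fun n => (n < d)%nat) l -> (length l <= k)%nat -> O y ->
  iterd E l g y = dpart E d (cnt l) g y.
Proof. intros. unfold dpart. apply (perm_iterd E d O k g); auto. apply perm_mlist; auto. Qed.

Lemma iterd_sub (E : Banach) d O k g h : openRd d O -> Ck E d O k g -> Ck E d O k h ->
  forall l, Forall (fun n => (n < d)%nat) l -> (length l <= k)%nat ->
  forall y, O y -> iterd E l (fun z => bsub (g z) (h z)) y = bsub (iterd E l g y) (iterd E l h y).
Proof.
  intros hO [G1 G2] [H1 H2] l. induction l as [|n l IH]; intros hf hk y hy.
  - reflexivity.
  - simpl. inversion hf; subst. simpl in hk.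
    transitivity (pd E n (fun z => bsub (iterd E l g z) (iterd E l h z)) y).
    { apply pd_local with d O; auto. intros; apply IH; auto; lia. }
    apply pd_spec. apply is_pderiv_sub; apply pd_spec'; [apply G1|apply H1]; auto; lia.
Qed.


Definition cauchy {E : Banach} (I : Type) (le : I -> I -> Prop) (u : I -> E) : Prop :=
  forall eps, eps > 0 -> exists i0, forall i j, le i0 i -> le i0 j -> bnorm (bsub (u i) (u j)) < eps.

Lemma inv_small eps : eps > 0 -> exists N : nat, / (INR N + 1) < eps.
Proof. intro he. destruct (archimed (/ eps)) as [h1 _].
  assert (0 <= IZR (up (/ eps))). { pose proof (Rinv_0_lt_compat _ he). lra. }
  exists (Z.to_nat (up (/ eps))). rewrite INR_IZR_INZ, Z2Nat.id.
  2:{ apply le_IZR. auto. }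
  apply Rlt_le_trans with (/ (/ eps)). apply Rinv_lt_contravar.
  apply Rmult_lt_0_compat. apply Rinv_0_lt_compat; auto. lra. lra.
  rewrite Rinv_inv. lra. Qed.

Lemma dir_up {I} {le : I -> I -> Prop} : directed I le -> forall i j, exists l, le i l /\ le j l.
Proof. intros [_ [_ [_ h]]]; exact h. Qed.
Lemma dir_trans {I} {le : I -> I -> Prop} : directed I le -> forall i j l, le i j -> le j l -> le i l.
Proof. intros [_ [_ [h _]]]; exact h. Qed.
Lemma dir_refl {I} {le : I -> I -> Prop} : directed I le -> forall i, le i i.
Proof. intros [_ [h _]]; exact h. Qed.

Lemma fin_dir {I} {le : I -> I -> Prop} (A : Type) : directed I le ->
  forall (L : list A) (P : A -> I -> Prop), (forall a i j, P a i -> le i j -> P a j) ->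
  (forall a, In a L -> exists i, P a i) -> exists i, forall a, In a L -> P a i.
Proof. intros hd L P hP. induction L as [|a L IH]; intros H.
  - destruct hd as [[i] _]. exists i. intros a [].
  - destruct IH as [i1 h1]. intros; apply H; simpl; auto.
    destruct (H a (or_introl eq_refl)) as [i2 h2].
    destruct (dir_up hd i1 i2) as [l [l1 l2]]. exists l. intros b [hb|hb].
    subst. eapply hP; eauto. eapply hP; eauto. Qed.

Lemma net_complete (E : Banach) I le (u : I -> E) : directed I le -> cauchy I le u ->
  exists L, net_lim E I le u L.
Proof.
  intros hd hc. assert (inh : inhabited I) by (destruct hd; auto). destruct inh as [i00].
  set (c := fun m : nat => epsilon (inhabits i00) (fun i0 => forall i j, le i0 i -> le i0 j ->
     bnorm (bsub (u i) (u j)) < / (INR m + 1))).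
  assert (hcm : forall m i j, le (c m) i -> le (c m) j -> bnorm (bsub (u i) (u j)) < / (INR m + 1)).
  { intro m. unfold c. apply epsilon_spec. apply hc. apply Rinv_0_lt_compat. pose proof (pos_INR m); lra. }
  set (up := fun i j => epsilon (inhabits i00) (fun l => le i l /\ le j l)).
  assert (hup : forall i j, le i (up i j) /\ le j (up i j)).
  { intros. unfold up. apply epsilon_spec. apply (dir_up hd). }
  set (js := fix js (m : nat) : I := match m with O => c O | S m' => up (js m') (c (S m')) end).
  assert (hjc : forall m, le (c m) (js m)).
  { intros [|m]; simpl. apply (dir_refl hd). apply hup. }
  assert (hjm : forall m p, (m <= p)%nat -> le (js m) (js p)).
  { intros m p hmp. induction hmp. apply (dir_refl hd).
    eapply (dir_trans hd); [exact IHhmp|]. simpl. apply hup. }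
  destruct (bcomplete E (fun m => u (js m))) as [L hL].
  { intros e he. destruct (inv_small e he) as [N hN]. exists N. intros m p hm hp.
    eapply Rlt_trans; [|exact hN]. apply hcm; eapply (dir_trans hd); eauto. }
  exists L. intros e he. destruct (inv_small (e/2)) as [N1 hN1]; [lra|].
  destruct (hL (e/2)) as [N2 hN2]; [lra|]. set (m := Nat.max N1 N2).
  exists (js m). intros i hi. specialize (hN2 m ltac:(lia)).
  assert (bnorm (bsub (u i) (u (js m))) < / (INR N1 + 1)).
  { apply hcm. eapply (dir_trans hd); [|exact hi]. eapply (dir_trans hd). apply hjc. apply hjm. lia.
    eapply (dir_trans hd). apply hjc. apply hjm. lia. }
  pose proof (norm_tri_sub (u i) (u (js m)) L). change (bnorm (bsub (u (js m)) L) < e/2) in hN2. lra.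
Qed.

Lemma net_lim_cauchy (E : Banach) I le (u : I -> E) L : net_lim E I le u L -> cauchy I le u.
Proof. intros h e he. destruct (h (e/2)) as [i0 hi]; [lra|]. exists i0. intros i j hi' hj.
  pose proof (norm_tri_sub (u i) L (u j)). pose proof (hi i hi'). pose proof (hi j hj).
  rewrite (norm_sub_sym L) in H. lra. Qed.

Lemma net_lim_sub (E : Banach) I le (u w : I -> E) L M : directed I le ->
  net_lim E I le u L -> net_lim E I le w M ->
  net_lim E I le (fun i => bsub (u i) (w i)) (bsub L M).
Proof. intros hd hu hw e he. destruct (hu (e/2)) as [i1 h1]; [lra|].
  destruct (hw (e/2)) as [i2 h2]; [lra|]. destruct (dir_up hd i1 i2) as [i0 [l1 l2]].
  exists i0. intros i hi. rewrite sub_sub. eapply Rle_lt_trans. apply norm_sub_le.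
  specialize (h1 i (dir_trans hd _ _ _ l1 hi)). specialize (h2 i (dir_trans hd _ _ _ l2 hi)). lra. Qed.

Lemma net_lim_scal (E : Banach) I le (u : I -> E) L a :
  net_lim E I le u L -> net_lim E I le (fun i => bscal a (u i)) (bscal a L).
Proof. intros hu e he. destruct (hu (e / (Rabs a + 1))) as [i0 h0].
  { apply Rdiv_lt_0_compat; auto. pose proof (Rabs_pos a); lra. }
  exists i0. intros i hi. rewrite <- scal_sub, bnorm_scal. specialize (h0 i hi).
  pose proof (Rabs_pos a). pose proof (norm_ge0 (bsub (u i) L)).
  assert (e = (e / (Rabs a + 1)) * (Rabs a + 1)) by (field; lra).
  set (q := e / (Rabs a + 1)) in *. nra. Qed.

Lemma net_lim_const (E : Banach) I le (c : E) : (exists i : I, True) -> net_lim E I le (fun _ => c) c.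
Proof. intros [i _] e he. exists i. intros. rewrite subxx, norm0. lra. Qed.

Lemma net_lim_le (E : Banach) I le (u : I -> E) L a : directed I le ->
  net_lim E I le u L -> (exists i1, forall i, le i1 i -> bnorm (u i) <= a) -> bnorm L <= a.
Proof. intros hd hu [i1 h1]. apply le_eps. intros e he. destruct (hu e he) as [i2 h2].
  destruct (dir_up hd i1 i2) as [i [l1 l2]]. specialize (h1 i l1). specialize (h2 i l2).
  pose proof (norm_tri_sub L (u i) bzero). rewrite !sub0r in H. rewrite norm_sub_sym in h2. lra. Qed.

Lemma net_lim_unique (E : Banach) I le (u : I -> E) L M : directed I le ->
  net_lim E I le u L -> net_lim E I le u M -> L = M.
Proof. intros hd hL hM. apply norm_small_eq. intros e he.
  destruct (hL (e/2)) as [i1 h1]; [lra|]. destruct (hM (e/2)) as [i2 h2]; [lra|].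
  destruct (dir_up hd i1 i2) as [i [l1 l2]]. specialize (h1 i l1). specialize (h2 i l2).
  pose proof (norm_tri_sub L (u i) M). rewrite norm_sub_sym in h1. lra. Qed.


Lemma nat_large a : exists m : nat, a < INR m.
Proof. destruct (archimed (Rabs a)) as [h1 _].
  assert (0 <= IZR (up (Rabs a))) by (pose proof (Rabs_pos a); lra).
  exists (Z.to_nat (up (Rabs a))). rewrite INR_IZR_INZ, Z2Nat.id.
  2:{ apply le_IZR. auto. } pose proof (Rle_abs a). lra. Qed.

Lemma seq_compact d O (x0 : nat -> R) (ys zs : nat -> nat -> R) r0 :
  O x0 -> inRd d x0 -> r0 > 0 ->
  (forall y, cube d x0 r0 y -> O y) ->
  (forall m, cube d x0 (r0 / (INR m + 1)) (ys m)) ->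
  (forall m, cube d x0 (r0 / (INR m + 1)) (zs m)) ->
  compact_in d O (fun p => p = x0 \/ exists m, p = ys m \/ p = zs m).
Proof.
  intros hx0 hx0d hr0 hO hy hz.
  assert (hsub : forall m, r0 / (INR m + 1) <= r0).
  { intro m. pose proof (pos_INR m). unfold Rdiv. rewrite <- (Rmult_1_r r0) at 2.
    apply Rmult_le_compat_l. lra. rewrite <- Rinv_1. apply Rinv_le_contravar; lra. }
  assert (hK : forall p, (p = x0 \/ exists m, p = ys m \/ p = zs m) -> cube d x0 r0 p).
  { intros p [->|[m [->| ->]]]. apply cube_center; auto.
    eapply cube_sub; [|apply hy]; auto. eapply cube_sub; [|apply hz]; auto. }
  split. 2:{ intros; apply hO, hK; auto. }
  split. { intros p hp. apply hK in hp. apply hp. }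
  intros J Oj hOj hcov.
  destruct (hcov x0 (or_introl eq_refl)) as [j0 hj0].
  destruct (hOj j0 x0 hj0) as [_ [rho [hrho Hrho]]].
  set (jf := fun p => epsilon (inhabits j0) (fun j => Oj j p)).
  assert (hjf : forall p, (p = x0 \/ exists m, p = ys m \/ p = zs m) -> Oj (jf p) p).
  { intros p hp. unfold jf. apply epsilon_spec. apply hcov; auto. }
  pose proof (pos_INR d).
  destruct (inv_small (rho / (INR d * r0 + 1))) as [N hN].
  { apply Rdiv_lt_0_compat; auto. nra. }
  assert (hfar : forall m, (N <= m)%nat -> forall p, cube d x0 (r0 / (INR m + 1)) p -> Oj j0 p).
  { intros m hm p hp. apply Hrho. apply hp. eapply Rle_lt_trans. apply cube_dist; eauto.
    assert (/ (INR m + 1) <= / (INR N + 1)).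
    { apply Rinv_le_contravar. pose proof (pos_INR N); lra. apply le_INR in hm. lra. }
    assert (INR d * r0 * / (INR N + 1) <= INR d * r0 * (rho / (INR d * r0 + 1))).
    { apply Rmult_le_compat_l. nra. lra. }
    assert (INR d * r0 * (rho / (INR d * r0 + 1)) < rho).
    { assert (rho = (rho / (INR d * r0 + 1)) * (INR d * r0 + 1)) by (field; nra).
      assert (0 < rho / (INR d * r0 + 1)) by (apply Rdiv_lt_0_compat; nra).
      set (q := rho / (INR d * r0 + 1)) in *. nra. }
    unfold Rdiv. assert (INR d * (r0 * / (INR m + 1)) <= INR d * r0 * / (INR N + 1)).
    { rewrite <- Rmult_assoc. apply Rmult_le_compat_l. nra. auto. }
    lra. }
  exists (j0 :: map (fun m => jf (ys m)) (seq 0 N) ++ map (fun m => jf (zs m)) (seq 0 N)).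
  intros p hp. destruct hp as [->|[m [->| ->]]].
  - exists j0. split; simpl; auto.
  - destruct (Nat.lt_ge_cases m N).
    + exists (jf (ys m)). split. right. apply in_or_app. left. apply in_map_iff. exists m.
      split; auto. apply in_seq. lia. apply hjf. right; exists m; auto.
    + exists j0. split. left; auto. eapply hfar; eauto.
  - destruct (Nat.lt_ge_cases m N).
    + exists (jf (zs m)). split. right. apply in_or_app. right. apply in_map_iff. exists m.
      split; auto. apply in_seq. lia. apply hjf. right; exists m; auto.
    + exists j0. split. left; auto. eapply hfar; eauto.
Qed.

Definition LBprop (E : Banach) d k gamma I (F : I -> (nat -> R) -> E) x0 r M : Prop :=
  (forall i beta y, (morder beta d <= k)%nat -> cube d x0 r y -> bnorm (dpart E d beta (F i) y) <= M) /\
  (forall i beta y z, morder beta d = k -> cube d x0 r y -> cube d x0 r z -> y <> z ->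
     bnorm (bsub (dpart E d beta (F i) y) (dpart E d beta (F i) z)) / Rpower (dist d y z) gamma <= M).

Lemma local_bound (E : Banach) d O k gamma I (F : I -> (nat -> R) -> E) :
  openRd d O -> bounded_net E d O k gamma I F ->
  forall x0, O x0 -> exists r M, r > 0 /\ (forall y, cube d x0 r y -> O y) /\
    LBprop E d k gamma I F x0 r M.
Proof.
  intros hO hB x0 hx0. destruct (open_cube d O x0 hO hx0) as [r0 [hr0 Hr0]].
  assert (hx0d : inRd d x0) by (destruct (hO x0 hx0); auto).
  apply NNPP. intro Hneg.
  assert (Hv : forall m : nat, exists yz : (nat -> R) * (nat -> R),
    cube d x0 (r0 / (INR m + 1)) (fst yz) /\ cube d x0 (r0 / (INR m + 1)) (snd yz) /\
    exists i beta, ((morder beta d <= k)%nat /\ bnorm (dpart E d beta (F i) (fst yz)) > INR m) \/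
      (morder beta d = k /\ fst yz <> snd yz /\
        bnorm (bsub (dpart E d beta (F i) (fst yz)) (dpart E d beta (F i) (snd yz)))
          / Rpower (dist d (fst yz) (snd yz)) gamma > INR m)).
  { intro m. apply NNPP. intro hm. apply Hneg. exists (r0 / (INR m + 1)), (INR m).
    pose proof (pos_INR m). split. apply Rdiv_lt_0_compat; lra.
    assert (hsub : r0 / (INR m + 1) <= r0).
    { unfold Rdiv. rewrite <- (Rmult_1_r r0) at 2.
      apply Rmult_le_compat_l. lra. rewrite <- Rinv_1. apply Rinv_le_contravar; lra. }
    split. intros; apply Hr0; eapply cube_sub; eauto.
    split.
    - intros i beta y hb hy. apply Rnot_gt_le. intro hc. apply hm. exists (y, y).
      simpl. split; auto. split; auto. exists i, beta. left; auto.
    - intros i beta y z hb hy hz hne. apply Rnot_gt_le. intro hc. apply hm. exists (y, z).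
      simpl. split; auto. split; auto. exists i, beta. right; auto. }
  set (Pv := fun (m : nat) (yz : (nat -> R) * (nat -> R)) => cube d x0 (r0 / (INR m + 1)) (fst yz) /\ cube d x0 (r0 / (INR m + 1)) (snd yz) /\
    exists i beta, ((morder beta d <= k)%nat /\ bnorm (dpart E d beta (F i) (fst yz)) > INR m) \/
      (morder beta d = k /\ fst yz <> snd yz /\
        bnorm (bsub (dpart E d beta (F i) (fst yz)) (dpart E d beta (F i) (snd yz)))
          / Rpower (dist d (fst yz) (snd yz)) gamma > INR m)).
  set (yz := fun m => epsilon (inhabits (x0, x0)) (Pv m)).
  assert (Hyz : forall m, Pv m (yz m)) by (intro m; unfold yz; apply epsilon_spec; apply Hv).
  set (ys := fun m => fst (yz m)). set (zs := fun m => snd (yz m)).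
  assert (hc : compact_in d O (fun p => p = x0 \/ exists m, p = ys m \/ p = zs m)).
  { apply seq_compact with r0; auto. intro m; apply (Hyz m). intro m; apply (Hyz m). }
  destruct hB as [_ hB]. destruct (hB _ hc) as [M0 hM0].
  destruct (nat_large M0) as [m hm].
  destruct (Hyz m) as [_ [_ [i [beta [[hb hv]|[hb [hne hv]]]]]]].
  - destruct (hM0 i) as [h1 _]. specialize (h1 beta (ys m) hb). unfold ys in h1.
    assert (bnorm (dpart E d beta (F i) (fst (yz m))) <= M0). { apply h1. right. exists m. left. reflexivity. }
    lra.
  - destruct (hM0 i) as [_ h2]. specialize (h2 beta (ys m) (zs m) hb). unfold ys, zs in h2.
    assert (bnorm (bsub (dpart E d beta (F i) (fst (yz m))) (dpart E d beta (F i) (snd (yz m))))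
          / Rpower (dist d (fst (yz m)) (snd (yz m))) gamma <= M0).
    { apply h2; auto. right; exists m; left; reflexivity. right; exists m; right; reflexivity. }
    lra.
Qed.


Definition cpath (j : nat) (y z : nat -> R) : nat -> R := fun i => if i <? j then z i else y i.

Lemma cpath0 y z : cpath 0 y z = y.
Proof. reflexivity. Qed.

Lemma cpathd d y z : inRd d y -> inRd d z -> cpath d y z = z.
Proof. intros hy hz. apply functional_extensionality; intro i. unfold cpath.
  destruct (i <? d) eqn:E; auto. apply Nat.ltb_ge in E. rewrite hy, hz; auto. Qed.

Lemma cpathS j y z : cpath (S j) y z = shift j (z j - y j) (cpath j y z).
Proof. apply functional_extensionality; intro i. unfold cpath, shift.
  destruct (Nat.eqb i j) eqn:E. apply Nat.eqb_eq in E. subst.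
  rewrite Nat.ltb_irrefl. assert (j <? S j = true) by (apply Nat.ltb_lt; lia). rewrite H. ring.
  apply Nat.eqb_neq in E. destruct (i <? S j) eqn:E1; destruct (i <? j) eqn:E2; auto.
  apply Nat.ltb_lt in E1; apply Nat.ltb_ge in E2; lia.
  apply Nat.ltb_ge in E1; apply Nat.ltb_lt in E2; lia. Qed.

Lemma cpath_cube d x0 r y z j : cube d x0 r y -> cube d x0 r z -> cube d x0 r (cpath j y z).
Proof. intros [hy cy] [hz cz]. split.
  intros i hi. unfold cpath. destruct (i <? j); auto.
  intros i hi. unfold cpath. destruct (i <? j); auto. Qed.

Lemma betw_between a b c s r : betw (b - a) s -> Rabs (a - c) < r -> Rabs (b - c) < r ->
  Rabs (a + s - c) < r.
Proof. intros hs ha hb. apply Rabs_def2 in ha. apply Rabs_def2 in hb. apply Rabs_def1;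
  destruct hs; lra. Qed.

Lemma cube_lip (E : Banach) d x0 r (g : (nat -> R) -> E) M :
  (forall j y, (j < d)%nat -> cube d x0 r y -> exists v, is_pderiv E j g y v /\ bnorm v <= M) ->
  forall y z, cube d x0 r y -> cube d x0 r z ->
  bnorm (bsub (g z) (g y)) <= M * sumabs d (fun i => z i - y i).
Proof.
  intros H y z hy hz.
  assert (forall j, (j <= d)%nat -> bnorm (bsub (g (cpath j y z)) (g y)) <= M * sumabs j (fun i => z i - y i)).
  { induction j; intros hj.
    - simpl. rewrite cpath0, subxx, norm0. lra.
    - rewrite cpathS. simpl.
      assert (hc : forall s, betw (z j - y j) s -> cube d x0 r (shift j s (cpath j y z))).
      { intros s hs. apply cube_shift; [lia| apply cpath_cube; auto|].
        unfold cpath. rewrite Nat.ltb_irrefl. apply betw_between with (z j); auto.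
        apply hy; lia. apply hz; lia. }
      set (w := fun s => epsilon (inhabits bzero) (fun v => is_pderiv E j g (shift j s (cpath j y z)) v /\ bnorm v <= M)).
      assert (hw : forall s, betw (z j - y j) s -> is_pderiv E j g (shift j s (cpath j y z)) (w s) /\ bnorm (bsub (w s) bzero) <= M).
      { intros s hs. rewrite sub0r. unfold w. apply epsilon_spec. apply H. lia. apply hc; auto. }
      pose proof (MVI_seg E g (cpath j y z) j (z j - y j) bzero M w hw) as HM.
      rewrite scal_zero, sub0r in HM.
      pose proof (norm_tri_sub (g (shift j (z j - y j) (cpath j y z))) (g (cpath j y z)) (g y)).
      specialize (IHj ltac:(lia)). lra. }
  specialize (H0 d (Nat.le_refl d)). rewrite cpathd in H0; auto. apply hy. apply hz.
Qed.

Lemma Rpower_pos x y : 0 < Rpower x y.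
Proof. unfold Rpower. apply exp_pos. Qed.

Lemma sumabs_dist d y z : sumabs d (fun i => z i - y i) <= INR d * dist d y z.
Proof. apply sumabs_le. intros i hi. rewrite Rabs_minus_sym. apply coord_le_dist; auto. Qed.

Lemma EQ_cube (E : Banach) d O k gamma I (F : I -> (nat -> R) -> E) :
  openRd d O -> 0 < gamma -> bounded_net E d O k gamma I F ->
  forall x0 r M, r > 0 -> (forall y, cube d x0 r y -> O y) -> LBprop E d k gamma I F x0 r M ->
  forall eps, eps > 0 -> exists delta, delta > 0 /\ forall l i y z,
    Forall (fun n => (n < d)%nat) l -> (length l <= k)%nat ->
    cube d x0 r y -> cube d x0 r z -> dist d y z < delta ->
    bnorm (bsub (iterd E l (F i) y) (iterd E l (F i) z)) <= eps.
Proof.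
  intros hO hg [hCk hB] x0 r M hr hcO [L1 L2] eps heps.
  set (M' := Rabs M + 1). assert (hM' : 0 < M') by (unfold M'; pose proof (Rabs_pos M); lra).
  assert (hMM : M <= M') by (unfold M'; pose proof (Rle_abs M); lra).
  pose proof (pos_INR d).
  set (d1 := Rpower (eps / M') (/ gamma)). set (d2 := eps / (M' * (INR d + 1))).
  assert (hd1 : 0 < d1) by apply Rpower_pos.
  assert (hd2 : 0 < d2) by (apply Rdiv_lt_0_compat; nra).
  exists (Rmin d1 d2). split. apply Rmin_pos; auto.
  intros l i y z hl hk hy hz hdist.
  assert (hdist1 : dist d y z < d1) by (eapply Rlt_le_trans; [exact hdist| apply Rmin_l]).
  assert (hdist2 : dist d y z < d2) by (eapply Rlt_le_trans; [exact hdist| apply Rmin_r]).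
  destruct (hCk i) as [hC _].
  destruct (Nat.eq_dec (length l) k) as [eqk|ltk].
  - destruct (classic (y = z)) as [<-|hne]. { rewrite subxx, norm0; lra. }
    rewrite (iterd_dpart E d O k (F i) l y), (iterd_dpart E d O k (F i) l z); auto; try (apply hcO; auto).
    assert (hq := L2 i (cnt l) y z). rewrite morder_cnt in hq; auto. specialize (hq eqk hy hz hne).
    assert (hpos : 0 < dist d y z). { apply dist_pos; auto. apply hy. apply hz. }
    set (P := Rpower (dist d y z) gamma) in *. assert (hP : 0 < P) by apply Rpower_pos.
    set (N := bnorm (bsub (dpart E d (cnt l) (F i) y) (dpart E d (cnt l) (F i) z))) in *.
    assert (N <= M * P). { unfold Rdiv in hq. apply Rmult_le_reg_r with (/ P).
      apply Rinv_0_lt_compat; auto. rewrite Rmult_assoc, Rinv_r by lra. lra. }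
    assert (P < eps / M').
    { unfold P. replace (eps / M') with (Rpower d1 gamma).
      apply Rlt_Rpower_l; auto. unfold d1. rewrite Rpower_mult, Rinv_l by lra.
      apply Rpower_1. apply Rdiv_lt_0_compat; auto. }
    assert (eps = (eps / M') * M') by (field; lra).
    pose proof (norm_ge0 (bsub (dpart E d (cnt l) (F i) y) (dpart E d (cnt l) (F i) z))).
    fold N in H2. nra.
  - rewrite norm_sub_sym.
    assert (Hl := cube_lip E d x0 r (iterd E l (F i)) M').
    assert (H0 : bnorm (bsub (iterd E l (F i) z) (iterd E l (F i) y)) <= M' * sumabs d (fun i0 => z i0 - y i0)).
    { apply Hl; auto. intros j w hj hw. exists (iterd E (j :: l) (F i) w). split.
      { apply pd_spec'. destruct hC as [hC1 _]. apply hC1; auto. lia. }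
      assert (hjl : Forall (fun n => (n < d)%nat) (j :: l)) by (constructor; auto).
      assert (hlen : (length (j :: l) <= k)%nat) by (simpl; lia).
      rewrite (iterd_dpart E d O k (F i) (j :: l) w hO hC hjl hlen (hcO w hw)).
      eapply Rle_trans; [|exact hMM]. apply L1; auto. rewrite morder_cnt; auto. }
    pose proof (sumabs_dist d y z). pose proof (dist_ge0 d y z).
    assert (eps = d2 * (M' * (INR d + 1))) by (unfold d2; field; nra).
    assert (M' * sumabs d (fun i0 => z i0 - y i0) <= M' * (INR d * dist d y z)) by (apply Rmult_le_compat_l; lra).
    assert (INR d * dist d y z <= (INR d + 1) * d2) by nra.
    assert (M' * (INR d * dist d y z) <= M' * ((INR d + 1) * d2)) by (apply Rmult_le_compat_l; lra).
    nra.
Qed.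


Definition Hyp (E : Banach) d O k gamma I (le : I -> I -> Prop) (F : I -> (nat -> R) -> E) : Prop :=
  openRd d O /\ 0 < gamma /\ directed I le /\ bounded_net E d O k gamma I F.

Definition valid d k (l : list nat) : Prop := Forall (fun n => (n < d)%nat) l /\ (length l <= k)%nat.

Lemma LEQ E d O k gamma I le F : Hyp E d O k gamma I le F ->
  forall x0, O x0 -> exists r, r > 0 /\ (forall y, cube d x0 r y -> O y) /\
  forall eps, eps > 0 -> exists delta, delta > 0 /\ forall l i y z, valid d k l ->
    cube d x0 r y -> cube d x0 r z -> dist d y z < delta ->
    bnorm (bsub (iterd E l (F i) y) (iterd E l (F i) z)) <= eps.
Proof.
  intros [hO [hg [hd hB]]] x0 hx0.
  destruct (local_bound E d O k gamma I F hO hB x0 hx0) as [r [M [hr [hc hL]]]].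
  exists r. split; auto. split; auto. intros eps heps.
  destruct (EQ_cube E d O k gamma I F hO hg hB x0 r M hr hc hL eps heps) as [dl [hdl H]].
  exists dl. split; auto. intros l i y z [h1 h2]. apply H; auto.
Qed.

Lemma LEQ_center E d O k gamma I le F : Hyp E d O k gamma I le F ->
  forall x, O x -> forall eps, eps > 0 -> exists rho, rho > 0 /\ (forall y, cube d x rho y -> O y) /\
  forall l i y, valid d k l -> cube d x rho y -> bnorm (bsub (iterd E l (F i) y) (iterd E l (F i) x)) <= eps.
Proof.
  intros hH x hx eps heps. destruct (LEQ E d O k gamma I le F hH x hx) as [r [hr [hc H]]].
  destruct (H eps heps) as [dl [hdl H1]]. pose proof (pos_INR d).
  assert (hxd : inRd d x) by (destruct hH as [hO _]; destruct (hO x hx); auto).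
  set (rho := Rmin r (dl / (INR d + 1))).
  assert (hrho : rho > 0) by (apply Rmin_pos; auto; apply Rdiv_lt_0_compat; lra).
  exists rho. split; auto. split. intros y hy; apply hc; eapply cube_sub; [|exact hy]; apply Rmin_l.
  intros l i y hl hy. apply H1; auto. eapply cube_sub; [|exact hy]; apply Rmin_l.
  apply cube_center; auto.
  rewrite dist_sym. eapply Rle_lt_trans. apply cube_dist; eauto.
  apply Rle_lt_trans with (INR d * (dl / (INR d + 1))). apply Rmult_le_compat_l; auto. apply Rmin_r.
  assert (dl = (dl / (INR d + 1)) * (INR d + 1)) by (field; lra).
  assert (0 < dl / (INR d + 1)) by (apply Rdiv_lt_0_compat; lra).
  set (q := dl / (INR d + 1)) in *. nra.
Qed.

Lemma scal_quot {E : Banach} t (A c : E) : t <> 0 ->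
  bnorm (bsub (bscal (/ t) A) c) = Rabs (/ t) * bnorm (bsub A (bscal t c)).
Proof. intro ht. rewrite <- bnorm_scal. f_equal. rewrite scal_sub, bscalA, Rinv_l, bscal1 by auto.
  reflexivity. Qed.

Lemma deriv_est E d O k gamma I le F : Hyp E d O k gamma I le F ->
  forall x, O x -> forall eps, eps > 0 -> exists rho, rho > 0 /\ (forall y, cube d x rho y -> O y) /\
  forall n l t i, valid d k (n :: l) -> t <> 0 -> Rabs t < rho ->
    bnorm (bsub (bscal (/ t) (bsub (iterd E l (F i) (shift n t x)) (iterd E l (F i) x)))
       (iterd E (n :: l) (F i) x)) <= eps.
Proof.
  intros hH x hx eps heps.
  destruct (LEQ_center E d O k gamma I le F hH x hx eps heps) as [rho [hr [hc H]]].
  exists rho. split; auto. split; auto. intros n l t i [hl hk] ht htr.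
  assert (hxd : inRd d x) by (destruct hH as [hO _]; destruct (hO x hx); auto).
  inversion hl; subst. simpl in hk.
  destruct hH as [hO [_ [_ [hCk _]]]]. destruct (hCk i) as [[hC1 _] _].
  rewrite scal_quot by auto.
  assert (bnorm (bsub (bsub (iterd E l (F i) (shift n t x)) (iterd E l (F i) x))
     (bscal t (iterd E (n :: l) (F i) x))) <= eps * Rabs t).
  { apply MVI_seg with (w := fun s => iterd E (n :: l) (F i) (shift n s x)).
    intros s hs. apply betw_abs in hs.
    assert (cube d x rho (shift n s x)).
    { apply cube_shift; auto. apply cube_center; auto. replace (x n + s - x n) with s by ring. lra. }
    split. apply pd_spec'. apply hC1; [auto|lia|auto|apply hc; auto].
    apply H; auto. split; auto. }
  rewrite Rabs_inv. assert (0 < Rabs t) by (apply Rabs_pos_lt; auto).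
  apply Rmult_le_reg_l with (Rabs t); auto. rewrite <- Rmult_assoc, Rinv_r, Rmult_1_l by lra. lra.
Qed.

Lemma valid_tail d k n l : valid d k (n :: l) -> valid d k l.
Proof. intros [h1 h2]. inversion h1; subst. split; auto. simpl in h2; lia. Qed.

Lemma cauchy_all E d O k gamma I le F : Hyp E d O k gamma I le F ->
  (forall x, O x -> cauchy I le (fun i => F i x)) ->
  forall l, valid d k l -> forall x, O x -> cauchy I le (fun i => iterd E l (F i) x).
Proof.
  intros hH hbase l. induction l as [|n l IH]; intros hl x hx.
  - simpl. apply hbase; auto.
  - intros e he. destruct (deriv_est E d O k gamma I le F hH x hx (e/3)) as [rho [hr [hc Hd]]]; [lra|].
    assert (hxd : inRd d x) by (destruct hH as [hO _]; destruct (hO x hx); auto).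
    set (t := rho / 2). assert (ht : 0 < t) by (unfold t; lra).
    assert (htr : Rabs t < rho) by (rewrite Rabs_right; unfold t; lra).
    assert (hn : (n < d)%nat) by (destruct hl as [h _]; inversion h; auto).
    assert (hxt : O (shift n t x)).
    { apply hc. apply cube_shift; auto. apply cube_center; auto. replace (x n + t - x n) with t by ring.
      rewrite Rabs_right; unfold t; lra. }
    pose proof (valid_tail _ _ _ _ hl) as hl'.
    set (eta := e * t / 6). assert (heta : eta > 0) by (unfold eta; nra).
    destruct (IH hl' _ hxt eta heta) as [i1 h1]. destruct (IH hl' _ hx eta heta) as [i2 h2].
    destruct hH as [hO [hg [hd hB]]].
    destruct (dir_up hd i1 i2) as [i0 [l1 l2]]. exists i0. intros i j hi hj.
    set (Q := fun i => bscal (/ t) (bsub (iterd E l (F i) (shift n t x)) (iterd E l (F i) x))).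
    assert (hQi := Hd n l t i hl ltac:(lra) htr). assert (hQj := Hd n l t j hl ltac:(lra) htr).
    fold (Q i) in hQi. fold (Q j) in hQj.
    assert (bnorm (bsub (Q i) (Q j)) < e / 3).
    { unfold Q. rewrite <- scal_sub, bnorm_scal, sub_sub.
      pose proof (h1 i j (dir_trans hd _ _ _ l1 hi) (dir_trans hd _ _ _ l1 hj)).
      pose proof (h2 i j (dir_trans hd _ _ _ l2 hi) (dir_trans hd _ _ _ l2 hj)).
      pose proof (norm_sub_le (bsub (iterd E l (F i) (shift n t x)) (iterd E l (F j) (shift n t x)))
                              (bsub (iterd E l (F i) x) (iterd E l (F j) x))).
      rewrite Rabs_right by (left; apply Rinv_0_lt_compat; lra).
      apply Rmult_lt_reg_l with t; auto. rewrite <- Rmult_assoc, Rinv_r, Rmult_1_l by lra.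
      unfold eta in *. lra. }
    pose proof (norm_tri_sub (iterd E (n :: l) (F i) x) (Q i) (iterd E (n :: l) (F j) x)).
    pose proof (norm_tri_sub (Q i) (Q j) (iterd E (n :: l) (F j) x)).
    rewrite (norm_sub_sym _ (Q i)) in H0. lra.
Qed.

Definition Glim (E : Banach) I le (F : I -> (nat -> R) -> E) l x : E :=
  epsilon (inhabits bzero) (net_lim E I le (fun i => iterd E l (F i) x)).

Lemma G_spec E d O k gamma I le F : Hyp E d O k gamma I le F ->
  (forall x, O x -> cauchy I le (fun i => F i x)) ->
  forall l x, valid d k l -> O x -> net_lim E I le (fun i => iterd E l (F i) x) (Glim E I le F l x).
Proof. intros hH hb l x hl hx. unfold Glim. apply epsilon_spec. apply net_complete.
  destruct hH as [_ [_ [hd _]]]; auto. eapply cauchy_all; eauto. Qed.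


Lemma dir_inh {I} {le : I -> I -> Prop} : directed I le -> exists i : I, True.
Proof. intros [[i] _]. exists i; auto. Qed.

Lemma G_deriv E d O k gamma I le F : Hyp E d O k gamma I le F ->
  (forall x, O x -> cauchy I le (fun i => F i x)) ->
  forall n l x, valid d k (n :: l) -> O x ->
  is_pderiv E n (Glim E I le F l) x (Glim E I le F (n :: l) x).
Proof.
  intros hH hb n l x hl hx e he.
  destruct (deriv_est E d O k gamma I le F hH x hx (e/2)) as [rho [hr [hc Hd]]]; [lra|].
  assert (hxd : inRd d x) by (destruct hH as [hO _]; destruct (hO x hx); auto).
  assert (hn : (n < d)%nat) by (destruct hl as [h _]; inversion h; auto).
  exists rho. split; auto. intros t ht htr.
  assert (hxt : O (shift n t x)).
  { apply hc. apply cube_shift; auto. apply cube_center; auto. replace (x n + t - x n) with t by ring. auto. }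
  pose proof (valid_tail _ _ _ _ hl) as hl'.
  pose proof hH as [hO [hg [hd hB]]].
  assert (NL : net_lim E I le (fun i => bsub (bscal (/ t) (bsub (iterd E l (F i) (shift n t x)) (iterd E l (F i) x)))
       (iterd E (n :: l) (F i) x))
     (bsub (bscal (/ t) (bsub (Glim E I le F l (shift n t x)) (Glim E I le F l x))) (Glim E I le F (n :: l) x))).
  { apply net_lim_sub; [auto| |]. apply net_lim_scal. apply net_lim_sub; [auto| |].
    all: apply (G_spec E d O k gamma I le F); auto. }
  assert (bnorm (bsub (bscal (/ t) (bsub (Glim E I le F l (shift n t x)) (Glim E I le F l x))) (Glim E I le F (n :: l) x)) <= e/2).
  { eapply net_lim_le; [exact hd|exact NL|]. destruct (dir_inh hd) as [i1 _]. exists i1. intros i _. apply Hd; auto. }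
  lra.
Qed.

Lemma G_cont E d O k gamma I le F : Hyp E d O k gamma I le F ->
  (forall x, O x -> cauchy I le (fun i => F i x)) ->
  forall l, valid d k l -> contOn E d O (Glim E I le F l).
Proof.
  intros hH hb l hl x hx e he.
  destruct (LEQ_center E d O k gamma I le F hH x hx (e/2)) as [rho [hr [hc H]]]; [lra|].
  pose proof hH as [hO [hg [hd hB]]].
  exists rho. split; auto. intros y hy hdist.
  assert (hyc : cube d x rho y) by (apply ball_cube; auto; destruct (hO y hy); auto).
  assert (bnorm (bsub (Glim E I le F l y) (Glim E I le F l x)) <= e/2).
  { eapply net_lim_le; [exact hd| |]. apply net_lim_sub; [auto| |]; apply (G_spec E d O k gamma I le F); auto.
    destruct (dir_inh hd) as [i1 _]. exists i1. intros i _. apply H; auto. }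
  lra.
Qed.

Lemma iterd_f E d O k gamma I le F : Hyp E d O k gamma I le F ->
  (forall x, O x -> cauchy I le (fun i => F i x)) ->
  forall l, valid d k l -> forall y, O y -> iterd E l (Glim E I le F nil) y = Glim E I le F l y.
Proof.
  intros hH hb l. induction l as [|n l IH]; intros hl y hy.
  - reflexivity.
  - simpl. pose proof (valid_tail _ _ _ _ hl) as hl'.
    assert (hn : (n < d)%nat) by (destruct hl as [h _]; inversion h; auto).
    pose proof hH as [hO _].
    transitivity (pd E n (Glim E I le F l) y).
    { apply pd_local with d O; auto. }
    apply pd_spec. apply (G_deriv E d O k gamma I le F); auto.
Qed.

Lemma Ck_f E d O k gamma I le F : Hyp E d O k gamma I le F ->
  (forall x, O x -> cauchy I le (fun i => F i x)) ->
  Ck E d O k (Glim E I le F nil).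
Proof.
  intros hH hb. pose proof hH as [hO _]. split.
  - intros l hl hk n hn x hx. exists (Glim E I le F (n :: l) x).
    apply is_pderiv_local with d O (Glim E I le F l); auto.
    intros; symmetry; apply (iterd_f E d O k gamma I le F); auto. split; auto; lia.
    apply (G_deriv E d O k gamma I le F); auto. split. constructor; auto. simpl; lia.
  - intros l hl hk x hx e he.
    destruct (G_cont E d O k gamma I le F hH hb l (conj hl hk) x hx e he) as [dl [hdl H]].
    exists dl. split; auto. intros y hy hdy.
    rewrite !(iterd_f E d O k gamma I le F hH hb l (conj hl hk)); auto.
Qed.


Lemma valid_mlist d k beta : (morder beta d <= k)%nat -> valid d k (mlist beta d).
Proof. intro h. split. apply mlist_Forall. rewrite mlist_length; auto. Qed.

Lemma holder_f E d O k gamma I le F : Hyp E d O k gamma I le F ->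
  (forall x, O x -> cauchy I le (fun i => F i x)) ->
  forall K, compact_in d O K -> exists M, holder_bound E d k gamma K (Glim E I le F nil) M.
Proof.
  intros hH hb K hK. pose proof hH as [hO [hg [hd [hCk hB]]]].
  destruct (hB K hK) as [M hM]. exists M. destruct hK as [hKc hKO]. split.
  - intros beta x hbk hx. unfold dpart.
    rewrite (iterd_f E d O k gamma I le F hH hb); auto. 2: apply valid_mlist; auto.
    eapply net_lim_le; [exact hd| apply (G_spec E d O k gamma I le F); auto; apply valid_mlist; auto|].
    destruct (dir_inh hd) as [i1 _]. exists i1. intros i _. destruct (hM i) as [h1 _].
    apply h1; auto.
  - intros beta x y hbk hx hy hne. unfold dpart.
    assert (hv : valid d k (mlist beta d)) by (apply valid_mlist; lia).
    rewrite !(iterd_f E d O k gamma I le F hH hb _ hv); auto.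
    assert (hpos : 0 < Rpower (dist d x y) gamma) by apply Rpower_pos.
    set (P := Rpower (dist d x y) gamma) in *.
    assert (bnorm (bsub (Glim E I le F (mlist beta d) x) (Glim E I le F (mlist beta d) y)) <= M * P).
    { eapply net_lim_le; [exact hd| apply net_lim_sub; [auto| |]; apply (G_spec E d O k gamma I le F); auto|].
      destruct (dir_inh hd) as [i1 _]. exists i1. intros i _. destruct (hM i) as [_ h2].
      specialize (h2 beta x y hbk hx hy hne). fold P in h2. unfold dpart in h2.
      unfold Rdiv in h2. apply Rmult_le_reg_r with (/ P). apply Rinv_0_lt_compat; auto.
      rewrite Rmult_assoc, Rinv_r by lra. lra. }
    unfold Rdiv. apply Rmult_le_reg_r with P; auto. rewrite Rmult_assoc, Rinv_l by lra. lra.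
Qed.

Fixpoint allL (d k : nat) : list (list nat) :=
  match k with
  | O => nil :: nil
  | S k' => nil :: flat_map (fun l => map (fun n => n :: l) (seq 0 d)) (allL d k')
  end.

Lemma allL_in d k l : valid d k l -> In l (allL d k).
Proof. revert l. induction k; intros l [h1 h2].
  - destruct l; simpl in *. auto. lia.
  - destruct l as [|n l]. simpl; auto. simpl. right. apply in_flat_map. exists l.
    inversion h1; subst. split. apply IHk. split; auto. simpl in h2; lia.
    apply in_map_iff. exists n. split; auto. apply in_seq. lia. Qed.

Lemma conv_f E d O k gamma I le F : Hyp E d O k gamma I le F ->
  (forall x, O x -> cauchy I le (fun i => F i x)) ->
  conv_Ck E d O k I le F (Glim E I le F nil).
Proof.
  intros hH hb K [hKc hKO] eps heps. pose proof hH as [hO [hg [hd [hCk hB]]]].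
  set (e3 := eps / 3). assert (he3 : e3 > 0) by (unfold e3; lra).
  set (Prho := fun x rho => rho > 0 /\ (forall y, cube d x rho y -> O y) /\
     forall l i y, valid d k l -> cube d x rho y ->
       bnorm (bsub (iterd E l (F i) y) (iterd E l (F i) x)) <= e3).
  set (rf := fun x => epsilon (inhabits 1) (Prho x)).
  assert (hrf : forall x, O x -> Prho x (rf x)).
  { intros x hx. unfold rf. apply epsilon_spec. apply (LEQ_center E d O k gamma I le F hH x hx e3 he3). }
  assert (hG : forall x l y, O x -> valid d k l -> cube d x (rf x) y ->
     bnorm (bsub (Glim E I le F l y) (Glim E I le F l x)) <= e3).
  { intros x l y hx hl hy. destruct (hrf x hx) as [_ [hc H]].
    eapply net_lim_le; [exact hd| apply net_lim_sub; [auto| |]; apply (G_spec E d O k gamma I le F); auto|].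
    destruct (dir_inh hd) as [i1 _]. exists i1. intros i _. apply H; auto. }
  destruct hKc as [hKd hKcov].
  destruct (hKcov (nat -> R) (fun x y => K x /\ cube d x (rf x) y)) as [Lp hLp].
  { intros x y [hx hy]. destruct (cube_open d x (rf x) y hy) as [hyd [r [hr H]]].
    split; [auto|]. exists r. split; [auto|]. intros z hz hdz. split; [exact hx| apply H; auto]. }
  { intros y hy. exists y. split; auto. apply cube_center; auto. apply (hrf y (hKO y hy)). }
  destruct (fin_dir ((nat -> R) * list nat) hd (list_prod Lp (allL d k))
     (fun p i => K (fst p) -> valid d k (snd p) -> forall i', le i i' ->
        bnorm (bsub (iterd E (snd p) (F i') (fst p)) (Glim E I le F (snd p) (fst p))) <= e3)) as [i0 hi0].
  { intros p i j h hij hk hv i' hi'. apply h; auto. eapply (dir_trans hd); eauto. }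
  { intros [x l] _. simpl. destruct (classic (K x /\ valid d k l)) as [[hx hl]|hn].
    - destruct (G_spec E d O k gamma I le F hH hb l x hl (hKO x hx) e3 he3) as [i1 h1].
      exists i1. intros _ _ i' hi'. left. apply h1; auto.
    - destruct (dir_inh hd) as [i1 _]. exists i1. intros hx hl. exfalso; auto. }
  exists i0. intros i hi beta y hbk hy.
  destruct (hLp y hy) as [x [hxL [hx hxy]]].
  set (l := mlist beta d). assert (hl : valid d k l) by (apply valid_mlist; auto).
  unfold dpart. fold l.
  rewrite (iterd_sub E d O k (F i) (Glim E I le F nil) hO (proj1 (hCk i))
             (Ck_f E d O k gamma I le F hH hb) l (proj1 hl) (proj2 hl) y (hKO y hy)).
  rewrite (iterd_f E d O k gamma I le F hH hb l hl y (hKO y hy)).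
  assert (h1 := hi0 (x, l) ltac:(apply in_prod; auto; apply allL_in; auto) hx hl i hi). simpl in h1.
  destruct (hrf x (hKO x hx)) as [_ [_ H]].
  assert (h2 := H l i y hl hxy).
  assert (h3 := hG x l y (hKO x hx) hl hxy).
  pose proof (norm_tri_sub (iterd E l (F i) y) (iterd E l (F i) x) (Glim E I le F l y)).
  pose proof (norm_tri_sub (iterd E l (F i) x) (Glim E I le F l x) (Glim E I le F l y)).
  rewrite (norm_sub_sym (Glim E I le F l x)) in H1. unfold e3 in *. lra.
Qed.

Lemma final_from_base E d O k gamma I le F : Hyp E d O k gamma I le F ->
  (forall x, O x -> cauchy I le (fun i => F i x)) ->
  exists f, Ckg_loc E d O k gamma f /\ conv_Ck E d O k I le F f.
Proof. intros hH hb. exists (Glim E I le F nil). split. split.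
  apply (Ck_f E d O k gamma I le F); auto. apply (holder_f E d O k gamma I le F); auto.
  apply (conv_f E d O k gamma I le F); auto. Qed.


Lemma dense_cauchy E d O k gamma I le F U : Hyp E d O k gamma I le F -> dense_in d O U ->
  forall l, valid d k l -> (forall u, U u -> cauchy I le (fun i => iterd E l (F i) u)) ->
  forall x, O x -> cauchy I le (fun i => iterd E l (F i) x).
Proof.
  intros hH [hUO hU] l hl hc x hx e he. pose proof hH as [hO [hg [hd hB]]].
  destruct (LEQ_center E d O k gamma I le F hH x hx (e/3)) as [rho [hr [hcO H]]]; [lra|].
  destruct (hU x hx rho hr) as [u [hu hxu]].
  assert (hcu : cube d x rho u) by (apply ball_cube; auto; destruct (hO u (hUO u hu)); auto).
  destruct (hc u hu (e/3)) as [i0 h0]; [lra|]. exists i0. intros i j hi hj.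
  specialize (h0 i j hi hj). pose proof (H l i u hl hcu). pose proof (H l j u hl hcu).
  pose proof (norm_tri_sub (iterd E l (F i) x) (iterd E l (F i) u) (iterd E l (F j) x)).
  pose proof (norm_tri_sub (iterd E l (F i) u) (iterd E l (F j) u) (iterd E l (F j) x)).
  rewrite (norm_sub_sym (iterd E l (F i) x) (iterd E l (F i) u)) in H2. lra.
Qed.

Lemma base_case1 E d O k gamma I le F U : Hyp E d O k gamma I le F -> dense_in d O U ->
  (forall x, U x -> exists L, net_lim E I le (fun i => F i x) L) ->
  forall x, O x -> cauchy I le (fun i => F i x).
Proof.
  intros hH hU hL x hx. apply (dense_cauchy E d O k gamma I le F U hH hU nil); auto.
  split; simpl; auto; lia. intros u hu. destruct (hL u hu) as [L h]. eapply net_lim_cauchy; eauto.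
Qed.

Definition EQon (E : Banach) d k I (F : I -> (nat -> R) -> E) x0 r : Prop :=
  forall eps, eps > 0 -> exists delta, delta > 0 /\ forall l i y z, valid d k l ->
    cube d x0 r y -> cube d x0 r z -> dist d y z < delta ->
    bnorm (bsub (iterd E l (F i) y) (iterd E l (F i) z)) <= eps.

Lemma betw_grid t N k s : (k <= N)%nat -> betw (t / (INR N + 1)) s ->
  betw t (INR k * (t / (INR N + 1)) + s).
Proof. intros hk hs. pose proof (pos_INR k). apply le_INR in hk.
  set (h := t / (INR N + 1)) in *. assert (t = h * (INR N + 1)) by (unfold h; field; pose proof (pos_INR N); lra).
  destruct hs as [hs|hs].
  - left. split; nra.
  - right. split; nra. Qed.

Lemma SEG E d O k gamma I le F : Hyp E d O k gamma I le F -> (1 <= k)%nat ->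
  (forall n x, (n < d)%nat -> O x -> cauchy I le (fun i => pd E n (F i) x)) ->
  forall x0 r, r > 0 -> (forall y, cube d x0 r y -> O y) -> EQon E d k I F x0 r ->
  forall q m t, (m < d)%nat -> (forall s, betw t s -> cube d x0 r (shift m s q)) ->
  forall eps, eps > 0 -> exists i0, forall i j, le i0 i -> le i0 j ->
    bnorm (bsub (bsub (F i (shift m t q)) (F j (shift m t q))) (bsub (F i q) (F j q))) <= eps.
Proof.
  intros hH hk hder x0 r hr hcO hEQ q m t hm hseg eps heps.
  pose proof hH as [hO [hg [hd [hCk hB]]]].
  pose proof (Rabs_pos t) as hta.
  set (eta := eps / (3 * (Rabs t + 1))).
  assert (heta : eta > 0) by (unfold eta; apply Rdiv_lt_0_compat; lra).
  destruct (hEQ eta heta) as [dl [hdl Hdl]].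
  destruct (inv_small (dl / (Rabs t + 1))) as [N hN]. { apply Rdiv_lt_0_compat; lra. }
  pose proof (pos_INR N) as hNp.
  set (h := t / (INR N + 1)).
  assert (hh : Rabs h < dl).
  { unfold h. unfold Rdiv. rewrite Rabs_mult, Rabs_inv, (Rabs_right (INR N + 1)) by lra.
    assert (dl = (dl / (Rabs t + 1)) * (Rabs t + 1)) by (field; lra).
    assert (0 < / (INR N + 1)) by (apply Rinv_0_lt_compat; lra).
    set (a := dl / (Rabs t + 1)) in *. nra. }
  set (g := fun k : nat => shift m (INR k * h) q).
  assert (hgc : forall kk, (kk <= S N)%nat -> cube d x0 r (g kk)).
  { intros kk hkk. unfold g. apply hseg.
    destruct kk. simpl. rewrite Rmult_0_l. destruct (Rle_dec 0 t); [left|right]; lra.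
    replace (INR (S kk) * h) with (INR kk * h + h) by (rewrite S_INR; ring).
    apply betw_grid. lia. unfold h. destruct (Rle_dec 0 t).
    left. split. unfold Rdiv; apply Rmult_le_pos; [lra| left; apply Rinv_0_lt_compat; lra]. apply Rle_refl.
    right. split. apply Rle_refl. assert (0 < / (INR N + 1)) by (apply Rinv_0_lt_compat; lra). unfold Rdiv. nra. }
  destruct (fin_dir nat hd (seq 0 (S N))
     (fun kk i0 => forall i j, le i0 i -> le i0 j ->
        bnorm (bsub (pd E m (F i) (g kk)) (pd E m (F j) (g kk))) < eta)) as [i0 hi0].
  { intros kk i j H hij i' j' h1 h2. apply H; eapply (dir_trans hd); eauto. }
  { intros kk hkk. apply in_seq in hkk. apply hder; auto. apply hcO, hgc. lia. }
  exists i0. intros i j hi hj.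
  set (Dl := fun z => bsub (F i z) (F j z)).
  assert (piece : forall kk, (kk <= N)%nat ->
    bnorm (bsub (Dl (g (S kk))) (Dl (g kk))) <= 3 * eta * Rabs h).
  { intros kk hkk.
    assert (hgS : g (S kk) = shift m h (g kk)).
    { unfold g. rewrite shift_shift. f_equal. rewrite S_INR. ring. }
    set (c := bsub (pd E m (F i) (g kk)) (pd E m (F j) (g kk))).
    assert (hc : bnorm c < eta) by (apply (hi0 kk); auto; apply in_seq; lia).
    assert (hpts : forall s, betw h s -> cube d x0 r (shift m s (g kk))).
    { intros s hs. unfold g. rewrite shift_shift. apply hseg. apply betw_grid; auto. }
    assert (HM : bnorm (bsub (bsub (Dl (shift m h (g kk))) (Dl (g kk))) (bscal h c)) <= (2 * eta) * Rabs h).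
    { apply MVI_seg with (w := fun s => bsub (pd E m (F i) (shift m s (g kk))) (pd E m (F j) (shift m s (g kk)))).
      intros s hs. split.
      - apply is_pderiv_sub; apply pd_spec'.
        + destruct (hCk i) as [[C1 _] _]. apply (C1 nil); [constructor| simpl; lia| auto| apply hcO, hpts; auto].
        + destruct (hCk j) as [[C1 _] _]. apply (C1 nil); [constructor| simpl; lia| auto| apply hcO, hpts; auto].
      - unfold c. rewrite sub_sub. eapply Rle_trans. apply norm_sub_le.
        assert (hds : dist d (shift m s (g kk)) (g kk) < dl).
        { rewrite dist_sym, dist_shift by auto. apply betw_abs in hs. lra. }
        assert (hv : valid d k (m :: nil)) by (split; [constructor; auto| simpl; lia]).
        pose proof (Hdl (m :: nil) i _ _ hv (hpts s hs) (hgc kk ltac:(lia)) hds).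
        pose proof (Hdl (m :: nil) j _ _ hv (hpts s hs) (hgc kk ltac:(lia)) hds).
        simpl in H, H0. lra. }
    rewrite hgS. pose proof (norm_tri_sub (bsub (Dl (shift m h (g kk))) (Dl (g kk))) (bscal h c) bzero).
    rewrite !sub0r in H. rewrite bnorm_scal in H.
    assert (Rabs h * bnorm c <= Rabs h * eta) by (apply Rmult_le_compat_l; [apply Rabs_pos| lra]).
    lra. }
  assert (chain : forall K, (K <= S N)%nat -> bnorm (bsub (Dl (g K)) (Dl (g 0%nat))) <= INR K * (3 * eta * Rabs h)).
  { induction K; intros hK. simpl. rewrite subxx, norm0. lra.
    pose proof (piece K ltac:(lia)). specialize (IHK ltac:(lia)).
    pose proof (norm_tri_sub (Dl (g (S K))) (Dl (g K)) (Dl (g 0%nat))). rewrite S_INR. lra. }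
  specialize (chain (S N) (Nat.le_refl _)).
  assert (hg0 : g 0%nat = q) by (unfold g; simpl; rewrite Rmult_0_l; apply shift0).
  assert (hgN : g (S N) = shift m t q) by (unfold g, h; f_equal; rewrite S_INR; field; lra).
  rewrite hg0, hgN in chain. unfold Dl in chain.
  assert (INR (S N) * Rabs h = Rabs t).
  { unfold h. rewrite S_INR. unfold Rdiv. rewrite Rabs_mult, Rabs_inv, (Rabs_right (INR N + 1)) by lra.
    field. lra. }
  assert (INR (S N) * (3 * eta * Rabs h) = 3 * eta * Rabs t) by (rewrite <- H; ring).
  rewrite H0 in chain.
  assert (3 * eta * Rabs t <= eps).
  { unfold eta. assert (eps = eps / (3 * (Rabs t + 1)) * (3 * (Rabs t + 1))) by (field; lra).
    assert (0 < eps / (3 * (Rabs t + 1))) by (apply Rdiv_lt_0_compat; lra).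
    set (a := eps / (3 * (Rabs t + 1))) in *. nra. }
  lra.
Qed.

Lemma KEY E d O k gamma I le F : Hyp E d O k gamma I le F -> (1 <= k)%nat ->
  (forall n x, (n < d)%nat -> O x -> cauchy I le (fun i => pd E n (F i) x)) ->
  forall x, O x -> exists r, r > 0 /\ (forall y, cube d x r y -> O y) /\
  forall y, cube d x r y -> forall eps, eps > 0 -> exists i0, forall i j, le i0 i -> le i0 j ->
    bnorm (bsub (bsub (F i y) (F j y)) (bsub (F i x) (F j x))) <= eps.
Proof.
  intros hH hk hder x hx. pose proof hH as [hO [hg [hd [hCk hB]]]].
  assert (hxd : inRd d x) by (destruct (hO x hx); auto).
  destruct (LEQ E d O k gamma I le F hH x hx) as [r [hr [hc hEQ]]].
  exists r. split; auto. split; auto. intros y hy.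
  assert (hxc : cube d x r x) by (apply cube_center; auto).
  assert (Hp : forall p, (p <= d)%nat -> forall eps, eps > 0 -> exists i0, forall i j, le i0 i -> le i0 j ->
    bnorm (bsub (bsub (F i (cpath p x y)) (F j (cpath p x y))) (bsub (F i x) (F j x))) <= eps).
  { induction p; intros hp eps heps.
    - destruct (dir_inh hd) as [i0 _]. exists i0. intros. rewrite cpath0, subxx, norm0. lra.
    - destruct (IHp ltac:(lia) (eps/2)) as [i1 h1]; [lra|].
      destruct (SEG E d O k gamma I le F hH hk hder x r hr hc hEQ (cpath p x y) p (y p - x p)
                  ltac:(lia)) with (eps := eps/2) as [i2 h2]; [| lra |].
      { intros s hs. apply cube_shift; [lia| apply cpath_cube; auto|].
        unfold cpath. rewrite Nat.ltb_irrefl. replace (x p + s - x p) with s by ring.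
        apply betw_abs in hs. eapply Rle_lt_trans; [exact hs|]. destruct hy as [_ hy]. apply hy. lia. }
      destruct (dir_up hd i1 i2) as [i0 [l1 l2]]. exists i0. intros i j hi hj.
      specialize (h1 i j (dir_trans hd _ _ _ l1 hi) (dir_trans hd _ _ _ l1 hj)).
      specialize (h2 i j (dir_trans hd _ _ _ l2 hi) (dir_trans hd _ _ _ l2 hj)).
      rewrite cpathS. pose proof (norm_tri_sub (bsub (F i (shift p (y p - x p) (cpath p x y))) (F j (shift p (y p - x p) (cpath p x y)))) (bsub (F i (cpath p x y)) (F j (cpath p x y))) (bsub (F i x) (F j x))). lra. }
  intros eps heps. destruct (Hp d (Nat.le_refl d) eps heps) as [i0 h0]. exists i0.
  rewrite cpathd in h0; auto. apply hy.
Qed.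

Lemma cauchy_transfer (E : Banach) I le (u w : I -> E) : directed I le ->
  (forall eps, eps > 0 -> exists i0, forall i j, le i0 i -> le i0 j ->
     bnorm (bsub (bsub (u i) (u j)) (bsub (w i) (w j))) <= eps) ->
  (cauchy I le u <-> cauchy I le w).
Proof.
  intros hd H. split; intros hc e he.
  - destruct (H (e/2)) as [i1 h1]; [lra|]. destruct (hc (e/2)) as [i2 h2]; [lra|].
    destruct (dir_up hd i1 i2) as [i0 [l1 l2]]. exists i0. intros i j hi hj.
    specialize (h1 i j (dir_trans hd _ _ _ l1 hi) (dir_trans hd _ _ _ l1 hj)).
    specialize (h2 i j (dir_trans hd _ _ _ l2 hi) (dir_trans hd _ _ _ l2 hj)).
    pose proof (norm_tri_sub (bsub (w i) (w j)) (bsub (u i) (u j)) bzero). rewrite !sub0r in H0.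
    rewrite norm_sub_sym in h1. lra.
  - destruct (H (e/2)) as [i1 h1]; [lra|]. destruct (hc (e/2)) as [i2 h2]; [lra|].
    destruct (dir_up hd i1 i2) as [i0 [l1 l2]]. exists i0. intros i j hi hj.
    specialize (h1 i j (dir_trans hd _ _ _ l1 hi) (dir_trans hd _ _ _ l1 hj)).
    specialize (h2 i j (dir_trans hd _ _ _ l2 hi) (dir_trans hd _ _ _ l2 hj)).
    pose proof (norm_tri_sub (bsub (u i) (u j)) (bsub (w i) (w j)) bzero). rewrite !sub0r in H0.
    lra.
Qed.

Lemma base_case2 E d O k gamma I le F : Hyp E d O k gamma I le F -> (1 <= k)%nat ->
  connectedRd d O ->
  (exists U, dense_in d O U /\ forall n x, (n < d)%nat -> U x ->
      exists L, net_lim E I le (fun i => pd E n (F i) x) L) ->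
  (exists x0, O x0 /\ exists L, net_lim E I le (fun i => F i x0) L) ->
  forall x, O x -> cauchy I le (fun i => F i x).
Proof.
  intros hH hk hconn [U [hU hUL]] [x0 [hx0 [L0 hL0]]].
  pose proof hH as [hO [hg [hd [hCk hB]]]].
  assert (hder : forall n x, (n < d)%nat -> O x -> cauchy I le (fun i => pd E n (F i) x)).
  { intros n x hn hx. apply (dense_cauchy E d O k gamma I le F U hH hU (n :: nil)); auto.
    split; [constructor; auto| simpl; lia].
    intros u hu. destruct (hUL n u hn hu) as [L h]. eapply net_lim_cauchy; eauto. }
  set (Cy := fun z => cauchy I le (fun i => F i z)).
  assert (hkey : forall x, O x -> exists r, r > 0 /\ forall y, cube d x r y -> O y /\ (Cy y <-> Cy x)).
  { intros x hx. destruct (KEY E d O k gamma I le F hH hk hder x hx) as [r [hr [hc H]]].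
    exists r. split; auto. intros y hy. split; auto. apply cauchy_transfer; auto. }
  set (A := fun y => exists x r, O x /\ Cy x /\ r > 0 /\ (forall z, cube d x r z -> O z /\ (Cy z <-> Cy x)) /\ cube d x r y).
  set (B := fun y => exists x r, O x /\ ~ Cy x /\ r > 0 /\ (forall z, cube d x r z -> O z /\ (Cy z <-> Cy x)) /\ cube d x r y).
  intros z hz. apply NNPP. intro hnz.
  apply (hconn A B).
  - intros y [x [r [h1 [h2 [h3 [h4 h5]]]]]]. destruct (cube_open d x r y h5) as [hyd [rr [hrr H]]].
    split; auto. exists rr. split; auto. intros w hw hdw. exists x, r.
    split; [auto|split;[auto|split;[auto|split;[auto|apply H; auto]]]].
  - intros y [x [r [h1 [h2 [h3 [h4 h5]]]]]]. destruct (cube_open d x r y h5) as [hyd [rr [hrr H]]].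
    split; auto. exists rr. split; auto. intros w hw hdw. exists x, r.
    split; [auto|split;[auto|split;[auto|split;[auto|apply H; auto]]]].
  - intros y hy. destruct (hkey y hy) as [r [hr H]].
    assert (hyc : cube d y r y) by (apply cube_center; auto; destruct (hO y hy); auto).
    destruct (classic (Cy y)); [left|right]; exists y, r;
      (split; [auto|split;[auto|split;[auto|split;[auto|auto]]]]).
  - intros y hy [x1 [r1 [_ [c1 [_ [h1 hy1]]]]]] [x2 [r2 [_ [c2 [_ [h2 hy2]]]]]].
    apply c2. apply (proj2 (h2 y hy2)). apply (proj2 (h1 y hy1)). auto.
  - destruct (hkey x0 hx0) as [r [hr H]]. exists x0. split; auto. exists x0, r.
    assert (Cy x0) by (eapply net_lim_cauchy; eauto).
    assert (cube d x0 r x0) by (apply cube_center; auto; destruct (hO x0 hx0); auto).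
    split; [auto|split;[auto|split;[auto|split;[auto|auto]]]].
  - destruct (hkey z hz) as [r [hr H]]. exists z. split; auto. exists z, r.
    assert (cube d z r z) by (apply cube_center; auto; destruct (hO z hz); auto).
    split; [auto|split;[auto|split;[auto|split;[auto|auto]]]].
Qed.


Theorem mainTheorem15 (E : Banach) (d : nat) (Om : (nat -> R) -> Prop) (k : nat) (gamma : R)
  (I : Type) (le : I -> I -> Prop) (F : I -> (nat -> R) -> E) :
  openRd d Om -> 0 < gamma -> gamma <= 1 ->
  directed I le ->
  bounded_net E d Om k gamma I F ->
  ((exists U, dense_in d Om U /\
      forall x, U x -> exists L, net_lim E I le (fun i => F i x) L)
   \/
   ((1 <= k)%nat /\ connectedRd d Om /\
    (exists U, dense_in d Om U /\
      forall n x, (n < d)%nat -> U x ->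
        exists L, net_lim E I le (fun i => pd E n (F i) x) L) /\
    (exists x0, Om x0 /\ exists L, net_lim E I le (fun i => F i x0) L))) ->
  exists f, Ckg_loc E d Om k gamma f /\ conv_Ck E d Om k I le F f.
Proof.
  intros hO hg _ hd hB hcase.
  assert (hH : Hyp E d Om k gamma I le F) by (split; auto).
  apply (final_from_base E d Om k gamma I le F hH).
  destruct hcase as [[U [hU hUL]] | [hk [hconn [hU' hx0]]]].
  - intros; eapply base_case1; eauto.
  - apply (base_case2 E d Om k gamma I le F hH hk hconn hU' hx0).
Qed.
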